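(* Let $\mathscr{G}=(G_{<},G_{=},G_{>},\sigma)$ be a graph $3$-partition on vertex set $L$ with coloring $\sigma\colon L\to M$. Then $\mathscr{G}$ can be explained by a relaxed scenario if and only if all of the following hold: $G_{<}$ and $G_{=}$ are properly colored by $\sigma$; $G_{<}$ and $G_{>}$ are cographs; and the pair $(\mathscr{R}_S(\mathscr{G}),\mathscr{F}_S(\mathscr{G}))$ is consistent.
   Context: All trees are planted phylogenetic trees: a tree $T$ has a distinguished vertex $0_T$ of degree $1$ whose unique neighbor $\rho_T$ is the root, and every vertex other than $0_T$ and the leaves $L(T)$ has at least two children. For $x,y\in V(T)$ write $y\preceq_T x$ if $x$ lies on the path from $0_T$ to $y$; edges are written $uv$ with $v\prec_T u$. The order extends to $V(T)\cup E(T)$: for a vertex $x$ and an edge $e=uv$, $x\preceq_T e$ iff $x\preceq_T v$, and $e\preceq_T x$ iff $u\preceq_T x$; for edges, $uv\preceq_T ab$ iff $v\preceq_T b$. $\mathrm{lca}_T(A)$ is the $\preceq_T$-minimal vertex that is an ancestor of all elements of $A$. A time map for $T$ is $\tau_T\colon V(T)\to\mathbb{R}$ with $\tau_T(x)<\tau_T(y)$ whenever $x\prec_T y$. A relaxed scenario $\mathscr{S}=(T,S,\sigma,\mu,\tau_T,\tau_S)$ consists of a gene tree $T$ with time map $\tau_T$, a species tree $S$ with time map $\tau_S$, a map $\sigma\colon L(T)\to M$ with $M\subseteq L(S)$, and a map $\mu\colon V(T)\to V(S)\cup E(S)$ such that (S0) $\mu(x)=0_S$ iff $x=0_T$; (S1)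 $\mu(x)\in L(S)$ iff $x\in L(T)$, in which case $\mu(x)=\sigma(x)$; (S2) if $\mu(x)\in V(S)$ then $\tau_S(\mu(x))=\tau_T(x)$; (S3) if $\mu(x)=uv\in E(S)$ then $\tau_S(v)<\tau_T(x)<\tau_S(u)$. The graphs $G_{=}(\mathscr{S})$, $G_{<}(\mathscr{S})$, $G_{>}(\mathscr{S})$ have vertex set $L(T)$, and for distinct $x,y$ the pair $xy$ is an edge of $G_{=}(\mathscr{S})$, $G_{<}(\mathscr{S})$, resp. $G_{>}(\mathscr{S})$ iff $\tau_T(\mathrm{lca}_T(x,y))$ is $=$, $<$, resp. $>$ than $\tau_S(\mathrm{lca}_S(\sigma(x),\sigma(y)))$. A graph $3$-partition $\mathscr{G}=(G_{<},G_{=},G_{>},\sigma)$ is an ordered tuple of three edge-disjoint graphs on a common vertex set $L$ with a coloring $\sigma\colon L\to M$ such that every unordered pair of distinct elements of $L$ is an edge of exactly one of the three graphs. It is explained by a relaxed scenario $\mathscr{S}=(T,S,\sigma,\mu,\tau_T,\tau_S)$ (with the same $\sigma$, so $L(T)=L$) if $G_{<}=G_{<}(\mathscr{S})$, $G_{=}=G_{=}(\mathscr{S})$, $G_{>}=G_{>}(\mathscr{S})$. A cograph is a graph with no induced path on four vertices. A rooted triple $xy|z$ is displayed by a tree $T$ if $\mathrm{lca}_T(x,y)\prec_T\mathrm{lca}_T(x,z)=\mathrm{lca}_T(y,z)$. A pair $(\mathscr{R},\mathscr{F})$ of triple sets is consistent if some tree displays all triples in $\mathscr{R}$ and none in $\mathscr{F}$.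 $\mathscr{R}_S(\mathscr{G})$ contains $XY|Z$ whenever there are $x,y,z\in L$ with pairwise distinct colors $X=\sigma(x)$, $Y=\sigma(y)$, $Z=\sigma(z)$ such that either ($xz,yz\in E(G_<)$ and $xy\notin E(G_<)$) or ($xy\in E(G_>)$ and $xz,yz\notin E(G_>)$). $\mathscr{F}_S(\mathscr{G})$ contains $XZ|Y$ and $YZ|X$ whenever there are $x,y,z\in L$ with pairwise distinct colors $X=\sigma(x),Y=\sigma(y),Z=\sigma(z)$ such that $xz,yz\in E(G_=)$ and $xy\notin E(G_=)$. *)

(* Defs.v *)
From mathcomp Require Import all_boot.
From Stdlib Require Import Reals.
Set Implicit Arguments. Unset Strict Implicit. Unset Printing Implicit Defensive.

(* A tree on the finite vertex type V is given by its planted vertex [pt0]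
   and a parent map [ptpar]; [ptpar pt0 = pt0] and every vertex reaches [pt0]
   by iterating [ptpar] (so the parent graph is a tree rooted at pt0). *)
Record ptree (V : finType) := PTree {
  pt0 : V;
  ptpar : V -> V;
  ptpar0 : ptpar pt0 = pt0;
  ptreach : forall x, exists k, iter k ptpar x = pt0
}.

Definition is_child V (T : ptree V) (c x : V) : Prop :=
  c <> pt0 T /\ ptpar T c = x.

Definition is_leaf V (T : ptree V) (x : V) : Prop :=
  x <> pt0 T /\ forall c, ~ is_child T c x.

Definition planted_phylo V (T : ptree V) : Prop :=
  (exists r, is_child T r (pt0 T) /\ forall r', is_child T r' (pt0 T) -> r' = r) /\
  (forall x, x <> pt0 T -> ~ is_leaf T x ->
     exists c1 c2, c1 <> c2 /\ is_child T c1 x /\ is_child T c2 x).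

Definition preceq V (T : ptree V) (y x : V) : Prop :=
  exists k, iter k (ptpar T) y = x.

Definition prec V (T : ptree V) (y x : V) : Prop := preceq T y x /\ y <> x.

Definition is_lca2 V (T : ptree V) (a b z : V) : Prop :=
  preceq T a z /\ preceq T b z /\
  forall w, preceq T a w -> preceq T b w -> preceq T z w.

Definition time_map V (T : ptree V) (tau : V -> R) : Prop :=
  forall x y, prec T x y -> (tau x < tau y)%R.

(* Leaves of the gene tree are identified with L via [lfT] (bijection onto
   L(T)); the colour set M is identified with a subset of L(S) via [lfS].
   mu x = inl v means mu(x) is the vertex v of S; mu x = inr v (v <> 0_S)
   means mu(x) is the edge (ptpar S v) v of S. *)
Definition relaxed_scenario (L M VT VS : finType)
  (T : ptree VT) (lfT : L -> VT) (S : ptree VS) (lfS : M -> VS)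
  (sigma : L -> M) (mu : VT -> VS + VS) (tT : VT -> R) (tS : VS -> R) : Prop :=
  planted_phylo T /\ planted_phylo S /\
  (injective lfT /\ (forall x, is_leaf T x <-> exists l, lfT l = x)) /\
  (injective lfS /\ (forall m, is_leaf S (lfS m))) /\
  time_map T tT /\ time_map S tS /\
  (forall x v, mu x = inr v -> v <> pt0 S) /\
  (forall x, mu x = inl (pt0 S) <-> x = pt0 T) /\
  (forall x, (exists v, mu x = inl v /\ is_leaf S v) <-> is_leaf T x) /\
           (forall l, mu (lfT l) = inl (lfS (sigma l))) /\
  (forall x v, mu x = inl v -> tS v = tT x) /\
  (forall x v, mu x = inr v -> (tS v < tT x)%R /\ (tT x < tS (ptpar S v))%R).

Definition scen_graph (L M VT VS : finType)
  (T : ptree VT) (lfT : L -> VT) (S : ptree VS) (lfS : M -> VS)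
  (sigma : L -> M) (tT : VT -> R) (tS : VS -> R) (cmp : R -> R -> Prop)
  (x y : L) : Prop :=
  x <> y /\ exists u w, is_lca2 T (lfT x) (lfT y) u /\
    is_lca2 S (lfS (sigma x)) (lfS (sigma y)) w /\ cmp (tT u) (tS w).

Definition simple_graph (L : finType) (G : rel L) : Prop :=
  (forall x, ~~ G x x) /\ (forall x y, G x y = G y x).

Definition graph3partition (L : finType) (Glt Geq Ggt : rel L) : Prop :=
  [/\ simple_graph Glt, simple_graph Geq, simple_graph Ggt &
      forall x y, x <> y ->
        [|| Glt x y && ~~ Geq x y && ~~ Ggt x y,
            ~~ Glt x y && Geq x y && ~~ Ggt x y
          | ~~ Glt x y && ~~ Geq x y && Ggt x y]].

Definition explained_by_relaxed_scenario (L M : finType) (Glt Geq Ggt : rel L)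
  (sigma : L -> M) : Prop :=
  exists (VT VS : finType) (T : ptree VT) (lfT : L -> VT) (S : ptree VS)
         (lfS : M -> VS) (mu : VT -> VS + VS) (tT : VT -> R) (tS : VS -> R),
    relaxed_scenario T lfT S lfS sigma mu tT tS /\
    (forall x y, Glt x y <-> scen_graph T lfT S lfS sigma tT tS Rlt x y) /\
    (forall x y, Geq x y <-> scen_graph T lfT S lfS sigma tT tS (@eq R) x y) /\
    (forall x y, Ggt x y <-> scen_graph T lfT S lfS sigma tT tS Rgt x y).

Definition properly_colored (L M : finType) (G : rel L) (sigma : L -> M) : Prop :=
  forall x y, G x y -> sigma x <> sigma y.

Definition cograph (L : finType) (G : rel L) : Prop :=
  forall a b c d : L, uniq [:: a; b; c; d] ->
    ~ (G a b /\ G b c /\ G c d /\ ~ G a c /\ ~ G b d /\ ~ G a d).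

Definition displays (M V : finType) (T : ptree V) (lf : M -> V) (X Y Z : M) : Prop :=
  exists u v, is_lca2 T (lf X) (lf Y) u /\ is_lca2 T (lf X) (lf Z) v /\
    is_lca2 T (lf Y) (lf Z) v /\ prec T u v.

(* a triple XY|Z is encoded by the ordered triple (X, Y, Z); sets of triples
   are predicates *)
Definition triples_consistent (M : finType) (Rs Fs : M -> M -> M -> Prop) : Prop :=
  exists (V : finType) (T : ptree V) (lf : M -> V),
    planted_phylo T /\ injective lf /\ (forall x, is_leaf T x <-> exists m, lf m = x) /\
    (forall X Y Z, Rs X Y Z -> displays T lf X Y Z) /\
    (forall X Y Z, Fs X Y Z -> ~ displays T lf X Y Z).

Definition distinct3 (M : finType) (X Y Z : M) : Prop :=
  X <> Y /\ X <> Z /\ Y <> Z.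

Definition RS (L M : finType) (Glt Geq Ggt : rel L) (sigma : L -> M) (X Y Z : M) : Prop :=
  exists x y z : L, sigma x = X /\ sigma y = Y /\ sigma z = Z /\ distinct3 X Y Z /\
    ((Glt x z /\ Glt y z /\ ~ Glt x y) \/ (Ggt x y /\ ~ Ggt x z /\ ~ Ggt y z)).

Definition FS (L M : finType) (Glt Geq Ggt : rel L) (sigma : L -> M) (A B C : M) : Prop :=
  exists x y z : L, distinct3 (sigma x) (sigma y) (sigma z) /\
    Geq x z /\ Geq y z /\ ~ Geq x y /\
    ((A, B, C) = (sigma x, sigma z, sigma y) \/ (A, B, C) = (sigma y, sigma z, sigma x)).

(* Main.v *)
Require Import Defs.
From mathcomp Require Import all_boot.
From Stdlib Require Import Reals.
From Stdlib Require Import Lra ClassicalEpsilon.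
Set Implicit Arguments. Unset Strict Implicit. Unset Printing Implicit Defensive.

Definition pb (P : Prop) : bool := if excluded_middle_informative P then true else false.
Lemma pbP (P : Prop) : reflect P (pb P).
Proof. rewrite /pb; case: excluded_middle_informative => h; constructor => //. Qed.

Section Gen.
Variable V : finType.
Variable T : ptree V.
Notation par := (ptpar T).
Notation p0 := (pt0 T).

Lemma iter_p0 k : iter k par p0 = p0.
Proof. elim: k => //= k ->; exact: ptpar0. Qed.

Lemma pre_refl x : preceq T x x.
Proof. by exists 0. Qed.

Lemma pre_trans x y z : preceq T x y -> preceq T y z -> preceq T x z.
Proof. move=> [k hk] [j hj]; exists (j + k); by rewrite iterD hk. Qed.

Lemma pre_p0 x : preceq T x p0.
Proof. exact: ptreach. Qed.

Lemma pre_par x : preceq T x (par x).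
Proof. by exists 1. Qed.

Lemma p0_pre x : preceq T p0 x -> x = p0.
Proof. by move=> [k <-]; rewrite iter_p0. Qed.

Lemma iter_cycle x k : iter k.+1 par x = x -> x = p0.
Proof.
move=> hc; have [n hn] := ptreach T x.
have hm : forall m, iter (m * k.+1) par x = x.
  elim=> [|m IH]; first by []. by rewrite mulSn iterD IH hc.
have h2 : forall j, iter (j + n) par x = p0 by move=> j; rewrite iterD hn iter_p0.
by rewrite -(hm n) -(subnK (leq_pmulr n (ltn0Sn k))) h2.
Qed.

Lemma pre_antisym x y : preceq T x y -> preceq T y x -> x = y.
Proof.
move=> [k hk] [j hj].
case: k hk => [|k] hk; first by [].
have : iter (j + k.+1) par x = x by rewrite iterD hk.
rewrite addnS => /iter_cycle hx.
by move: hk; rewrite hx iter_p0.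
Qed.

Lemma pre_chain y a b : preceq T y a -> preceq T y b -> preceq T a b \/ preceq T b a.
Proof.
move=> [k hk] [j hj]; case: (leqP k j) => h.
  left; exists (j - k); by rewrite -hk -iterD subnK.
right; exists (k - j); by rewrite -hj -iterD subnK // ltnW.
Qed.

Lemma par_neq x : x <> p0 -> par x <> x.
Proof. move=> hx hp; apply: hx; apply: (@iter_cycle x 0); by rewrite /= hp. Qed.

Lemma prec_par x : x <> p0 -> prec T x (par x).
Proof. move=> hx; split; [exact: pre_par | move=> e; exact: (par_neq hx (esym e))]. Qed.

Lemma prec_par_pre x y : prec T x y -> preceq T (par x) y.
Proof.
move=> [[k hk] hne]; case: k hk => [|k] hk; first by [].
exists k; by rewrite -iterSr.
Qed.

Lemma prec_neq_p0 x y : prec T x y -> x <> p0.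
Proof. move=> [h hne] e; subst x; by apply: hne; rewrite (p0_pre h). Qed.

Lemma lca_ex a b : exists z, is_lca2 T a b z.
Proof.
have ex : exists k, pb (preceq T b (iter k par a)).
  have [k hk] := ptreach T a; exists k; apply/pbP; rewrite hk; exact: pre_p0.
pose k := ex_minn ex.
have hk : preceq T b (iter k par a) by apply/pbP; rewrite /k; case: ex_minnP.
exists (iter k par a); split; first by exists k.
split; first exact: hk.
move=> w [j hj] hbw.
have hkj : k <= j.
  rewrite /k; case: ex_minnP => m _ hm; apply: hm; apply/pbP; by rewrite hj.
exists (j - k); by rewrite -iterD subnK.
Qed.

Lemma lca_uniq a b z z' : is_lca2 T a b z -> is_lca2 T a b z' -> z = z'.
Proof.
move=> [h1 [h2 h3]] [h1' [h2' h3']]; apply: pre_antisym; [exact: h3 | exact: h3'].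
Qed.

Lemma lca_sym a b z : is_lca2 T a b z -> is_lca2 T b a z.
Proof. move=> [h1 [h2 h3]]; split => //; split => // w ? ?; exact: h3. Qed.

Lemma lca_self a : is_lca2 T a a a.
Proof. split; [exact: pre_refl | split; [exact: pre_refl | by []]]. Qed.

Definition lcaf a b : V := proj1_sig (constructive_indefinite_description _ (lca_ex a b)).
Lemma lcafP a b : is_lca2 T a b (lcaf a b).
Proof. rewrite /lcaf; by case: constructive_indefinite_description. Qed.
Lemma lcafE a b z : is_lca2 T a b z -> lcaf a b = z.
Proof. move=> h; exact: lca_uniq (lcafP a b) h. Qed.
Lemma lcafC a b : lcaf a b = lcaf b a.
Proof. apply: lcafE; apply: lca_sym; exact: lcafP. Qed.
Lemma lcaf_self a : lcaf a a = a.
Proof. apply: lcafE; exact: lca_self. Qed.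

Variable tau : V -> R.
Hypothesis htau : time_map T tau.

Lemma tau_mono x y : preceq T x y -> (tau x <= tau y)%R.
Proof.
move=> h; case: (excluded_middle_informative (x = y)) => [->|hne]; first lra.
by apply: Rlt_le; apply: htau.
Qed.

Lemma tau_inj_chain x y : (preceq T x y \/ preceq T y x) -> tau x = tau y -> x = y.
Proof.
move=> hc he; case: (excluded_middle_informative (x = y)) => // hne.
case: hc => h.
  have := htau (conj h hne); lra.
have := htau (conj h (fun e => hne (esym e))); lra.
Qed.

Lemma lca_ultra a b c : (tau (lcaf a c) <= Rmax (tau (lcaf a b)) (tau (lcaf b c)))%R.
Proof.
have [ha [hb hm]] := lcafP a b; have [hb' [hc hm']] := lcafP b c.
case: (pre_chain hb hb') => h.
  have : preceq T (lcaf a c) (lcaf b c).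
    case: (lcafP a c) => _ [_ H]; apply: H => //; exact: pre_trans ha h.
  move/tau_mono; move: (Rmax_r (tau (lcaf a b)) (tau (lcaf b c))); lra.
have : preceq T (lcaf a c) (lcaf a b).
  case: (lcafP a c) => _ [_ H]; apply: H => //; exact: pre_trans hc h.
move/tau_mono; move: (Rmax_l (tau (lcaf a b)) (tau (lcaf b c))); lra.
Qed.

Lemma leaf_min x y : is_leaf T x -> preceq T y x -> y = x.
Proof.
move=> [hx0 hnc] [k hk]; case: k hk => [|k] hk; first by [].
exfalso; apply: (hnc (iter k par y)); split.
  move=> e; apply: hx0; by rewrite -hk iterS e ptpar0.
by rewrite -iterS.
Qed.

Lemma leaf_lca_strict x y : is_leaf T x -> x <> y -> is_leaf T y ->
  (tau x < tau (lcaf x y))%R.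
Proof.
move=> hx hne hy; apply: htau; case: (lcafP x y) => h1 [h2 _]; split => // e.
apply: hne; rewrite -e in h2; symmetry; exact: leaf_min hx h2.
Qed.

Lemma displays_iff (M : finType) (lf : M -> V) X Y Z :
  displays T lf X Y Z <->
  (tau (lcaf (lf X) (lf Y)) < tau (lcaf (lf X) (lf Z)) /\
   tau (lcaf (lf X) (lf Z)) = tau (lcaf (lf Y) (lf Z)))%R.
Proof.
split.
  move=> [u [v [hu [hv [hv' hp]]]]].
  rewrite (lcafE hu) (lcafE hv) (lcafE hv'); split => //; exact: htau.
move=> [hlt heq]; exists (lcaf (lf X) (lf Y)), (lcaf (lf X) (lf Z)).
have e : lcaf (lf X) (lf Z) = lcaf (lf Y) (lf Z).
  apply: tau_inj_chain heq; apply: (@pre_chain (lf Z)).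
    by case: (lcafP (lf X) (lf Z)) => _ [].
  by case: (lcafP (lf Y) (lf Z)) => _ [].
split; first exact: lcafP. split; first exact: lcafP.
split; first by rewrite e; exact: lcafP.
have hc : preceq T (lcaf (lf X) (lf Y)) (lcaf (lf X) (lf Z)) \/
          preceq T (lcaf (lf X) (lf Z)) (lcaf (lf X) (lf Y)).
  apply: (@pre_chain (lf X)); [by case: (lcafP (lf X) (lf Y)) | by case: (lcafP (lf X) (lf Z))].
case: hc => h.
  split => // e2; rewrite e2 in hlt; lra.
have := tau_mono h; lra.
Qed.

Definition desc x : {set V} := [set y | pb (preceq T y x)].

Lemma desc_proper x y : prec T x y -> desc x \proper desc y.
Proof.
move=> [h hne]; apply/properP; split.
  apply/subsetP => z; rewrite !inE => /pbP hz; apply/pbP; exact: pre_trans hz h.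
exists y; rewrite !inE; first by apply/pbP; exact: pre_refl.
apply/pbP => h2; apply: hne; exact: pre_antisym.
Qed.

Lemma leaf_below x : x <> p0 -> exists l, is_leaf T l /\ preceq T l x.
Proof.
move: {2}#|desc x| (leqnn #|desc x|) => n; elim: n x => [|n IH] x hn hx.
  exfalso; have : 0 < #|desc x|.
    apply/card_gt0P; exists x; rewrite inE; apply/pbP; exact: pre_refl.
  by rewrite leqn0 in hn; rewrite (eqP hn).
case: (excluded_middle_informative (is_leaf T x)) => hl.
  exists x; split => //; exact: pre_refl.
have [c hc] : exists c, is_child T c x.
  apply: NNPP => hn'; apply: hl; split => // c hc; apply: hn'; by exists c.
case: hc => hc0 hpc.
have hpr : prec T c x by rewrite -hpc; exact: prec_par.
have [l [hl1 hl2]] := IH c (leq_trans (proper_card (desc_proper hpr)) hn) hc0.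
exists l; split => //; exact: pre_trans hl2 hpr.1.
Qed.

Lemma below_root r : is_child T r p0 -> (forall r', is_child T r' p0 -> r' = r) ->
  forall x, x <> p0 -> preceq T x r.
Proof.
move=> hr hu x hx; have [k hk] := ptreach T x.
move: {2}k (leqnn k) => n; elim: n x hx k hk => [|n IH] x hx k hk hkn.
  by move: hkn; rewrite leqn0 => /eqP e; subst k.
case: (excluded_middle_informative (par x = p0)) => hp.
  rewrite (hu x (conj hx hp)); exact: pre_refl.
case: k hk hkn => [|k] hk hkn; first by [].
rewrite iterSr in hk; apply: pre_trans (pre_par x) _; exact: IH hp k hk hkn.
Qed.

End Gen.

Definition Rleb (a b : R) : bool := if Rle_dec a b then true else false.
Lemma RlebP a b : reflect (a <= b)%R (Rleb a b).
Proof. rewrite /Rleb; case: Rle_dec => h; constructor => //. Qed.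

Lemma Rmax_cases a b : Rmax a b = a \/ Rmax a b = b.
Proof. rewrite /Rmax; case: Rle_dec; auto. Qed.

Section FoldMax.
Variables (A : Type) (f : A -> R).
Lemma foldmax_ge (s : seq A) r0 : forall p, List.In p s -> (f p <= foldr (fun p m => Rmax (f p) m) r0 s)%R.
Proof.
elim: s => [|a s IH] p //= [->|h]; first exact: Rmax_l.
apply: Rle_trans (IH p h) (Rmax_r _ _).
Qed.
Lemma foldmax_att (s : seq A) r0 : foldr (fun p m => Rmax (f p) m) r0 s = r0 \/
   exists p, List.In p s /\ foldr (fun p m => Rmax (f p) m) r0 s = f p.
Proof.
elim: s => [|a s IH] /=; first by left.
case: (Rmax_cases (f a) (foldr (fun p m => Rmax (f p) m) r0 s)) => ->.
  right; exists a; by split; [left|].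
case: IH => [->|[p [hp ->]]]; first by left.
right; exists p; split => //; by right.
Qed.
End FoldMax.

Lemma In_mem (T : eqType) (x : T) s : List.In x s <-> x \in s.
Proof.
elim: s => [|a s IH] //=; rewrite in_cons; split.
  by case=> [->|/IH ->]; rewrite ?eqxx ?orbT.
by case/orP => [/eqP ->|/IH h]; [left|right].
Qed.

Section Build.
Variables (X : finType) (x0 : X) (d : X -> X -> R) (top : R).
Hypothesis dsym : forall x y, d x y = d y x.
Hypothesis dult : forall x y z, (d x z <= Rmax (d x y) (d y z))%R.
Hypothesis dpos : forall x y, x <> y -> (d x x < d x y)%R.
Hypothesis dtop : forall x y, (d x y < top)%R.

Lemma dself x y : (d x x <= d x y)%R.
Proof.
case: (excluded_middle_informative (x = y)) => [->|h]; first lra.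
exact: Rlt_le (dpos h).
Qed.

Definition ball x r : {set X} := [set z | Rleb (d x z) r].
Definition valid (A : {set X}) : bool :=
  (A == setT) || [exists x, exists y, A == ball x (d x y)].

Definition diam (A : {set X}) : R :=
  let a := odflt x0 [pick z in A] in
  foldr (fun p m => Rmax (d p.1 p.2) m) (d a a) (enum (setX A A)).

Lemma diam_ge (A : {set X}) z w : z \in A -> w \in A -> (d z w <= diam A)%R.
Proof.
move=> hz hw; rewrite /diam.
apply: (@foldmax_ge _ (fun p => d p.1 p.2) _ _ (z, w)).
apply/In_mem; by rewrite mem_enum in_setX hz hw.
Qed.

Lemma diam_att (A : {set X}) a : a \in A -> exists z w, z \in A /\ w \in A /\ diam A = d z w.
Proof.
move=> ha; rewrite /diam.
case: (@foldmax_att _ (fun p => d p.1 p.2) (enum (setX A A))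
          (d (odflt x0 [pick z in A]) (odflt x0 [pick z in A]))) => [->|[p [hp ->]]].
  case: pickP => [z hz|h]; last by move: (h a); rewrite ha.
  by exists z, z.
case: p hp => p1 p2 /In_mem; rewrite mem_enum in_setX => /andP [h1 h2]; by exists p1, p2.
Qed.

Lemma in_ball x r z : (z \in ball x r) = Rleb (d x z) r.
Proof. by rewrite inE. Qed.

Lemma ball_center x y r : (d x y <= r)%R -> ball y r = ball x r.
Proof.
move=> h; apply/setP => z; rewrite !in_ball.
apply/RlebP/RlebP => hz.
  have := dult x y z; have := Rmax_lub _ _ _ h hz; lra.
have := dult y x z; rewrite (dsym y x); have := Rmax_lub _ _ _ h hz; lra.
Qed.

Lemma x_in_ball x y : x \in ball x (d x y).
Proof. rewrite in_ball; apply/RlebP; exact: dself. Qed.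
Lemma y_in_ball x y : y \in ball x (d x y).
Proof. rewrite in_ball; apply/RlebP; lra. Qed.

Lemma diam_ball x y : diam (ball x (d x y)) = d x y.
Proof.
apply: Rle_antisym.
  have [z [w [hz [hw ->]]]] := diam_att (x_in_ball x y).
  move: hz hw; rewrite !in_ball => /RlebP hz /RlebP hw.
  have := dult z x w; rewrite (dsym z x); have := Rmax_lub _ _ _ hz hw; lra.
apply: diam_ge; [exact: x_in_ball | exact: y_in_ball].
Qed.

Lemma validT : valid setT.
Proof. by rewrite /valid eqxx. Qed.

Lemma valid_ball x y : valid (ball x (d x y)).
Proof. apply/orP; right; apply/existsP; exists x; apply/existsP; by exists y. Qed.

Lemma set1_ball x : [set x] = ball x (d x x).
Proof.
apply/setP => z; rewrite inE in_ball; apply/eqP/RlebP => [->|h]; first lra.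
apply: NNPP => hne; have := dpos (fun e => hne (esym e)); lra.
Qed.

Lemma valid1 x : valid [set x].
Proof. rewrite set1_ball; exact: valid_ball. Qed.

Lemma valid_ne (A : {set X}) : valid A -> exists a, a \in A.
Proof.
case/orP => [/eqP ->|/existsP [x /existsP [y /eqP ->]]].
  by exists x0; rewrite inE.
exists x; exact: x_in_ball.
Qed.

Lemma valid_ballE (A : {set X}) a : valid A -> a \in A -> A = ball a (diam A).
Proof.
case/orP => [/eqP ->|/existsP [x /existsP [y /eqP ->]]] ha.
  apply/setP => z; rewrite inE in_ball; symmetry; apply/RlebP; apply: diam_ge; by rewrite inE.
rewrite diam_ball; symmetry; apply: ball_center; by move: ha; rewrite in_ball => /RlebP.
Qed.

Lemma valid_lam (A B : {set X}) a : valid A -> valid B -> a \in A -> a \in B ->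
  A \subset B \/ B \subset A.
Proof.
move=> vA vB hA hB; rewrite (valid_ballE vA hA) (valid_ballE vB hB).
case: (Rle_dec (diam A) (diam B)) => h; [left|right]; apply/subsetP => z;
  rewrite !in_ball => /RlebP hz; apply/RlebP; lra.
Qed.

Lemma valid_strict (A B : {set X}) : valid A -> valid B -> A \proper B -> (diam A < diam B)%R.
Proof.
move=> vA vB hp; have [a ha] := valid_ne vA.
have hb : a \in B by move/properP: hp => [/subsetP h _]; exact: h.
apply: Rnot_le_lt => hle; move/properP: hp => [_ [z hzB hzA]].
move: hzA; rewrite (valid_ballE vA ha) in_ball; move: hzB; rewrite (valid_ballE vB hb) in_ball.
move=> /RlebP h1 /RlebP h2; lra.
Qed.

Lemma valid_min (B : {set X}) x y : valid B -> x \in B -> y \in B -> ball x (d x y) \subset B.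
Proof.
move=> vB hx hy; rewrite [in X in _ \subset X](valid_ballE vB hx).
apply/subsetP => z; rewrite !in_ball => /RlebP hz; apply/RlebP.
have := diam_ge hx hy; lra.
Qed.

Definition Vc := {A : {set X} | valid A}.
Definition rootc : Vc := exist _ setT validT.
Definition parc (A : Vc) : Vc := [arg min_(B < rootc | val A \proper val B) #|val B|].
Definition bpar (v : option Vc) : option Vc :=
  if v is Some A then (if val A == setT then None else Some (parc A)) else None.

Lemma parc_spec (A : Vc) : val A != setT ->
  val A \proper val (parc A) /\ forall B : Vc, val A \proper val B -> val (parc A) \subset val B.
Proof.
move=> hA; rewrite /parc; case: arg_minnP; first by rewrite /= properT.
move=> P hP hmin; split => // B hB.
have [a ha] := valid_ne (svalP A).
have haP : a \in val P by move/properP: hP => [/subsetP h _]; exact: h.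
have haB : a \in val B by move/properP: hB => [/subsetP h _]; exact: h.
case: (valid_lam (svalP P) (svalP B) haP haB) => // hs.
have := hmin B hB => hc.
have : val B == val P by rewrite eqEcard hs hc.
by move/eqP ->.
Qed.

Lemma bpar_some (A C : Vc) : bpar (Some C) = Some A -> val C \proper val A.
Proof.
rewrite /=; case: ifP => // hC [<-]; by case: (parc_spec (negbT hC)).
Qed.

Lemma breach v : exists k, iter k bpar v = None.
Proof.
case: v => [A|]; last by exists 0.
move: {2}#|~: val A| (leqnn #|~: val A|) => n.
elim: n A => [|n IH] A hn.
  have : val A == setT.
    move: hn; rewrite leqn0 cards_eq0 => /eqP h.
    by rewrite -(setCK (val A)) h setC0.
  by move=> h; exists 1; rewrite /= h.
case hA: (val A == setT); first by exists 1; rewrite /= hA.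
have [hp _] := parc_spec (negbT hA).
have hlt : #|~: val (parc A)| < #|~: val A|.
  have := proper_card hp; have := cardsC (val A); have := cardsC (val (parc A)).
  move=> e1 e2 e3; rewrite -(ltn_add2l #|val (parc A)|) e1 -e2 ltn_add2r //.
have [k hk] := IH (parc A) (leq_trans hlt hn).
exists k.+1; by rewrite iterSr /= hA.
Qed.

Definition BT : ptree (option Vc) := @PTree _ None bpar erefl breach.

Lemma iter_none k : iter k bpar None = None.
Proof. by elim: k => //= k ->. Qed.

Lemma preS (A B : Vc) : preceq BT (Some A) (Some B) <-> val A \subset val B.
Proof.
split.
  move=> [k hk]; elim: k B hk => [|k IH] B /=; first by move=> [->].
  case h: (iter k bpar (Some A)) => [C|] //= hC.
  apply: subset_trans (IH C h) _.
  by case/properP: (bpar_some hC).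
move: {2}#|~: val A| (leqnn #|~: val A|) => n.
elim: n A => [|n IH] A hn hAB.
  have : val A == setT.
    move: hn; rewrite leqn0 cards_eq0 => /eqP h.
    by rewrite -(setCK (val A)) h setC0.
  move=> /eqP hT; have : val A = val B.
    apply/eqP; rewrite eqEsubset hAB /= hT; exact: subsetT.
  by move/val_inj ->; exact: pre_refl.
case e: (val A == val B); first by rewrite (val_inj (eqP e)); exact: pre_refl.
have hpr : val A \proper val B by rewrite properEneq e hAB.
have hA : val A != setT.
  apply/negP => /eqP hT; move/properP: hpr => [_ [z _]]; by rewrite hT inE.
have [hp hm] := parc_spec hA.
have hlt : #|~: val (parc A)| < #|~: val A|.
  have := proper_card hp; have := cardsC (val A); have := cardsC (val (parc A)).
  move=> e1 e2 e3; rewrite -(ltn_add2l #|val (parc A)|) e1 -e2 ltn_add2r //.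
have [k hk] := IH (parc A) (leq_trans hlt hn) (hm B hpr).
exists k.+1; by rewrite iterSr /= (negbTE hA).
Qed.

Definition btau (v : option Vc) : R := if v is Some A then diam (val A) else top.

Lemma btime : time_map BT btau.
Proof.
move=> [A|] [B|] [[k hk] hne] /=.
- have hs : val A \subset val B by apply/preS; exists k.
  apply: valid_strict (svalP A) (svalP B) _.
  rewrite properEneq hs andbT; apply/negP => /eqP e; apply: hne; by rewrite (val_inj e).
- have [a ha] := valid_ne (svalP A).
  have [z [w [_ [_ ->]]]] := diam_att ha; exact: dtop.
- by move: hk; rewrite iter_none.
- by case: hne.
Qed.

Definition bsingle (x : X) : Vc := exist _ [set x] (valid1 x).
Definition blf (x : X) : option Vc := Some (bsingle x).

Lemma blf_inj : injective blf.
Proof.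
move=> x y h; have := congr1 (fun v : option Vc => if v is Some A then x \in val A else false) h.
rewrite /= !inE eqxx; by move/esym/eqP.
Qed.

Lemma child_containing (A : Vc) b : b \in val A -> val A != [set b] ->
  exists C : Vc, b \in val C /\ bpar (Some C) = Some A.
Proof.
move=> hb hne.
pose P : pred Vc := fun C : Vc => (b \in val C) && (val C \proper val A).
have hP1 : P (bsingle b).
  rewrite /P /= inE eqxx /= properEneq eq_sym hne /=; apply/subsetP => z; by rewrite inE => /eqP ->.
case: (@arg_maxnP _ (bsingle b) P (fun C => #|val C|) hP1) => C /andP [hbC hCA] hmax.
exists C; split => //.
have hCT : val C != setT.
  apply/negP => /eqP hT; move/properP: hCA => [_ [z _]]; by rewrite hT inE.
rewrite /= (negbTE hCT); congr Some; apply: val_inj.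
have [hp hm] := parc_spec hCT.
have hsub := hm A hCA.
apply/eqP; rewrite eqEsubset hsub /=.
apply: contraT => hn.
have hP2 : P (parc C).
  rewrite /P properEneq hsub andbT; apply/andP; split.
    by move/properP: hp => [/subsetP h _]; apply: h.
  apply/negP => /eqP e; move: hn; by rewrite e subxx.
have := hmax _ hP2; have := proper_card hp; rewrite /=; move=> h1 h2.
by move: (leq_ltn_trans h2 h1); rewrite ltnn.
Qed.

Lemma bleaf (A : Vc) : is_leaf BT (Some A) <-> exists x, val A = [set x].
Proof.
split.
  move=> [_ hnc]; have [a ha] := valid_ne (svalP A).
  exists a; apply/eqP; apply: contraT => hne.
  have [C [_ hC]] := child_containing ha hne.
  exfalso; apply: (hnc (Some C)); by split.
move=> [x hx]; split => // c [hc0 hpc].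
case: c hc0 hpc => [C|] // _ hpc.
have hp := bpar_some hpc; rewrite hx in hp.
have [a ha] := valid_ne (svalP C).
move/properP: hp => [/subsetP hs [z hz hzC]].
move: (hs a ha) hz; rewrite !inE => /eqP e1 /eqP e2; subst; by rewrite ha in hzC.
Qed.

Lemma bphylo : planted_phylo BT.
Proof.
split.
  exists (Some rootc); split; first by split => //=; rewrite eqxx.
  move=> [C|] [] // _ /=; case: ifP => // /eqP hT _.
  by congr Some; apply: val_inj.
move=> [A|] hx hnl //.
have [c hc] : exists c, is_child BT c (Some A).
  apply: NNPP => hn; apply: hnl; split => // c hc; apply: hn; by exists c.
case: c hc => [C|]; last by case.
move=> [_ hpc].
have hp := bpar_some hpc.
have [a ha] := valid_ne (svalP C).
move/properP: (hp) => [/subsetP hs [b hbA hbC]].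
have hne : val A != [set b].
  apply/negP => /eqP e; move: (hs a ha); rewrite e inE => /eqP hab; subst a; by rewrite ha in hbC.
have [C' [hbC' hpc']] := child_containing hbA hne.
exists (Some C), (Some C'); split.
  move=> [] e; subst C'; by rewrite hbC' in hbC.
by split; split.
Qed.

Lemma bleaves v : is_leaf BT v <-> exists x, blf x = v.
Proof.
case: v => [A|]; last by split; [case | case=> x].
rewrite bleaf; split => [[x hx]|[x [<-]]]; last by exists x.
exists x; rewrite /blf; congr Some; apply: val_inj; by rewrite hx.
Qed.

Lemma blca x y : btau (lcaf BT (blf x) (blf y)) = d x y.
Proof.
have vb := valid_ball x y.
have -> : lcaf BT (blf x) (blf y) = Some (exist _ (ball x (d x y)) vb).
  apply: lcafE; split.
    apply/preS => /=; apply/subsetP => z; rewrite inE => /eqP ->; exact: x_in_ball.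
  split.
    apply/preS => /=; apply/subsetP => z; rewrite inE => /eqP ->; exact: y_in_ball.
  move=> [B|] hx hy; last exact: pre_p0.
  apply/preS; move/preS: hx; move/preS: hy => /= hy hx.
  apply: valid_min (svalP B) _ _.
    by move/subsetP: hx; apply; rewrite inE.
  by move/subsetP: hy; apply; rewrite inE.
by rewrite /= diam_ball.
Qed.

End Build.

Lemma build_tree (X : finType) (x0 : X) (d : X -> X -> R) (top : R) :
  (forall x y, d x y = d y x) ->
  (forall x y z, (d x z <= Rmax (d x y) (d y z))%R) ->
  (forall x y, x <> y -> (d x x < d x y)%R) ->
  (forall x y, (d x y < top)%R) ->
  exists (V : finType) (T : ptree V) (lf : X -> V) (tau : V -> R),
    planted_phylo T /\ injective lf /\ (forall v, is_leaf T v <-> exists x, lf x = v) /\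
    time_map T tau /\ tau (pt0 T) = top /\
    (forall x y, tau (lcaf T (lf x) (lf y)) = d x y).
Proof.
move=> h1 h2 h3 h4.
exists _, (BT x0 h1 h2 h3), (blf h3), (btau x0 top).
split; first exact: bphylo.
split; first exact: blf_inj.
split; first exact: bleaves.
split; first exact: btime.
split; first by [].
exact: blca.
Qed.

Definition Rltb (a b : R) : bool := if Rlt_dec a b then true else false.
Lemma RltbP a b : reflect (a < b)%R (Rltb a b).
Proof. rewrite /Rltb; case: Rlt_dec => h; constructor => //. Qed.

Lemma ult_ge a b c : (a <= Rmax b c)%R -> (b < a)%R -> (a <= c)%R.
Proof. case: (Rmax_cases b c) => ->; lra. Qed.

Lemma step_ultra (L : finType) (A : {set L}) (Rel : L -> L -> bool) (u : L -> L -> R) (c : R) :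
  (forall x y z, x \in A -> y \in A -> z \in A -> Rel x y -> Rel y z -> Rel x z) ->
  (forall x y z, x \in A -> y \in A -> z \in A -> Rel x y -> Rel y z -> Rel x z ->
     (u x z <= Rmax (u x y) (u y z))%R) ->
  (forall x y, x \in A -> y \in A -> Rel x y -> (u x y <= c)%R) ->
  forall x y z, x \in A -> y \in A -> z \in A ->
  ((if Rel x z then u x z else c) <= Rmax (if Rel x y then u x y else c) (if Rel y z then u y z else c))%R.
Proof.
move=> htr hu hc x y z hx hy hz.
case hxz: (Rel x z); case hxy: (Rel x y); case hyz: (Rel y z).
- exact: hu.
- apply: Rle_trans (hc _ _ hx hz hxz) (Rmax_r _ _).
- apply: Rle_trans (hc _ _ hx hz hxz) (Rmax_l _ _).
- apply: Rle_trans (hc _ _ hx hz hxz) (Rmax_l _ _).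
- by rewrite (htr _ _ _ hx hy hz hxy hyz) in hxz.
- exact: Rmax_r.
- exact: Rmax_l.
- exact: Rmax_l.
Qed.

Section Core.
Variables (L : finType) (Glt Geq Ggt : rel L) (s : L -> L -> R).
Hypothesis H3 : graph3partition Glt Geq Ggt.
Hypothesis ssym : forall x y, s x y = s y x.
Hypothesis sult : forall x y z, (s x z <= Rmax (s x y) (s y z))%R.
Hypothesis sdiag : forall x, s x x = 1%R.
Hypothesis sge1 : forall x y, (1 <= s x y)%R.
Hypothesis hP : forall x y, x <> y -> Glt x y || Geq x y -> (1 < s x y)%R.
Hypothesis hR1 : forall x y z, (1 < s x y)%R -> (1 < s x z)%R -> (1 < s y z)%R ->
  Glt x z -> Glt y z -> ~~ Glt x y -> (s x y < s x z)%R /\ s x z = s y z.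
Hypothesis hR2 : forall x y z, (1 < s x y)%R -> (1 < s x z)%R -> (1 < s y z)%R ->
  Ggt x y -> ~~ Ggt x z -> ~~ Ggt y z -> (s x y < s x z)%R /\ s x z = s y z.
Hypothesis hF : forall x y z, (1 < s x y)%R -> (1 < s x z)%R -> (1 < s y z)%R ->
  Geq x z -> Geq y z -> ~~ Geq x y -> ~ ((s x z < s x y)%R /\ s x y = s z y).
Hypothesis hcl : cograph Glt.
Hypothesis hcg : cograph Ggt.

Definition Gle x y := Glt x y || Geq x y.

Lemma lt_irr x : Glt x x = false.
Proof. by case: H3 => [[h _] _ _ _]; apply: negbTE. Qed.
Lemma eq_irr x : Geq x x = false.
Proof. by case: H3 => [_ [h _] _ _]; apply: negbTE. Qed.
Lemma gt_irr x : Ggt x x = false.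
Proof. by case: H3 => [_ _ [h _] _]; apply: negbTE. Qed.
Lemma lt_sym x y : Glt x y = Glt y x.
Proof. by case: H3 => [[_ h] _ _ _]. Qed.
Lemma eq_sym' x y : Geq x y = Geq y x.
Proof. by case: H3 => [_ [_ h] _ _]. Qed.
Lemma gt_sym x y : Ggt x y = Ggt y x.
Proof. by case: H3 => [_ _ [_ h] _]. Qed.
Lemma le_sym x y : Gle x y = Gle y x.
Proof. by rewrite /Gle lt_sym eq_sym'. Qed.
Lemma le_irr x : Gle x x = false.
Proof. by rewrite /Gle lt_irr eq_irr. Qed.

Lemma part x y : x <> y ->
  [\/ [/\ Glt x y, ~~ Geq x y & ~~ Ggt x y], [/\ ~~ Glt x y, Geq x y & ~~ Ggt x y]
    | [/\ ~~ Glt x y, ~~ Geq x y & Ggt x y]].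
Proof.
case: H3 => _ _ _ h hne; case/or3P: (h x y hne) => /andP [/andP [a b] c];
  [apply: Or31 | apply: Or32 | apply: Or33]; by split.
Qed.

Lemma gtE x y : x <> y -> Ggt x y = ~~ Gle x y.
Proof. move=> h; rewrite /Gle; case: (part h) => [[a b c]|[a b c]|[a b c]]; by move: a b c; case: (Glt x y); case: (Geq x y); case: (Ggt x y). Qed.
Lemma lt_ngt x y : Glt x y -> ~~ Ggt x y.
Proof.
move=> h; case: (excluded_middle_informative (x = y)) => [e|hne]; first by rewrite e lt_irr in h.
by case: (part hne) => [[]|[]|[]] //; rewrite h.
Qed.
Lemma lt_neq x y : Glt x y -> ~~ Geq x y.
Proof.
move=> h; case: (excluded_middle_informative (x = y)) => [e|hne]; first by rewrite e lt_irr in h.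
by case: (part hne) => [[]|[]|[]] //; rewrite h.
Qed.
Lemma eq_ngt x y : Geq x y -> ~~ Ggt x y.
Proof.
move=> h; case: (excluded_middle_informative (x = y)) => [e|hne]; first by rewrite e eq_irr in h.
by case: (part hne) => [[]|[]|[]] //; rewrite h.
Qed.
Lemma le_ngt x y : Gle x y -> ~~ Ggt x y.
Proof. by case/orP; [exact: lt_ngt | exact: eq_ngt]. Qed.
Lemma le_neq x y : Gle x y -> x <> y.
Proof. move=> h e; by rewrite e le_irr in h. Qed.
Lemma le_s x y : Gle x y -> (1 < s x y)%R.
Proof. move=> h; exact: hP (le_neq h) h. Qed.
Lemma lt_le x y : Glt x y -> Gle x y.
Proof. by rewrite /Gle => ->. Qed.
Lemma lt_s x y : Glt x y -> (1 < s x y)%R.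
Proof. move/lt_le; exact: le_s. Qed.

Lemma le_P4 a b c e : Gle a b -> Gle b c -> Gle c e -> a <> c -> b <> e -> a <> e ->
  Gle a c || Gle b e || Gle a e.
Proof.
move=> hab hbc hce hac hbe hae; apply: contraT => H.
have n1 : Gle a c = false by apply/negbTE; apply: contra H => ->.
have n2 : Gle b e = false by apply/negbTE; apply: contra H => ->; rewrite orbT.
have n3 : Gle a e = false by apply/negbTE; apply: contra H => ->; rewrite orbT.
have hab' := le_neq hab; have hbc' := le_neq hbc; have hce' := le_neq hce.
have ne : forall u v : L, u <> v -> u != v by move=> u v h; apply/eqP.
have U : uniq [:: b; e; a; c].
  rewrite /= !inE !negb_or (ne _ _ hbe) (ne _ _ (fun h => hab' (esym h))) (ne _ _ hbc').
  by rewrite (ne _ _ (fun h => hae (esym h))) (ne _ _ (fun h => hce' (esym h))) (ne _ _ hac).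
exfalso; have HH := hcg U; apply: HH.
rewrite (gtE hbe) (gtE (fun h => hae (esym h))) (gtE hac) (gtE (fun h => hab' (esym h))).
rewrite (gtE (fun h => hce' (esym h))) (gtE hbc').
rewrite (le_sym e a) (le_sym b a) (le_sym e c) n1 n2 n3 hab hce hbc.
by do !split.
Qed.


Section Level.
Variables (A : {set L}) (th : R).
Hypothesis hth1 : (1 < th)%R.
Hypothesis hthmax : forall x y, x \in A -> y \in A -> (s x y <= th)%R.

Definition wb x y := Rltb (s x y) th.
Lemma wbP x y : reflect (s x y < th)%R (wb x y).
Proof. exact: RltbP. Qed.
Lemma wb_sym x y : wb x y = wb y x.
Proof. by rewrite /wb ssym. Qed.
Lemma wb_refl x : wb x x.
Proof. apply/wbP; by rewrite sdiag. Qed.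
Lemma crossE x y : x \in A -> y \in A -> ~~ wb x y -> s x y = th.
Proof. move=> hx hy /wbP h; have := hthmax hx hy; lra. Qed.
Lemma wb_trans x y z : wb x y -> wb y z -> wb x z.
Proof. move=> /wbP h1 /wbP h2; apply/wbP; have := sult x y z; have := Rmax_lub_lt _ _ _ h1 h2; lra. Qed.
Lemma wb_cross x y z : x \in A -> z \in A -> wb x y -> ~~ wb y z -> ~~ wb x z.
Proof.
move=> hx hz /wbP h1 /wbP h2; apply/wbP => h3.
have := sult y x z; rewrite (ssym y x) => h; have := Rmax_lub_lt _ _ _ h1 h3; lra.
Qed.
Lemma cross_s x y : x \in A -> y \in A -> ~~ wb x y -> (1 < s x y)%R.
Proof. move=> hx hy h; rewrite (crossE hx hy h); lra. Qed.
Lemma cross_neq x y : ~~ wb x y -> x <> y.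
Proof. move=> h e; by rewrite e wb_refl in h. Qed.

Definition near x y : Prop := x = y \/ Gle x y \/ exists z, z \in A /\ Gle x z /\ Gle z y.

Lemma near_sym x y : near x y -> near y x.
Proof.
case=> [->|[h|[z [hz [h1 h2]]]]]; [by left | by right; left; rewrite le_sym |].
right; right; exists z; by rewrite le_sym h2 le_sym h1.
Qed.

Lemma path3 a b c e : b \in A -> c \in A -> Gle a b -> Gle b c -> Gle c e -> near a e.
Proof.
move=> hb hc hab hbc hce.
case: (excluded_middle_informative (a = e)) => [->|hae]; first by left.
case: (excluded_middle_informative (a = c)) => [hac|hac].
  by right; left; rewrite hac.
case: (excluded_middle_informative (b = e)) => [hbe|hbe].
  by right; left; rewrite -hbe.
case/orP: (le_P4 hab hbc hce hac hbe hae) => [/orP [h|h]|h].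
- right; right; exists c; by split.
- right; right; exists b; by split.
- by right; left.
Qed.

Lemma near_edge x y w : y \in A -> near x y -> Gle y w -> near x w.
Proof.
move=> hy [<-|[h|[z [hz [h1 h2]]]]] hw; first by right; left.
  right; right; exists y; by split.
exact: path3 hz hy h1 h2 hw.
Qed.

Lemma near_trans x y w : y \in A -> w \in A -> near x y -> near y w -> near x w.
Proof.
move=> hy hw hxy [<-|[h|[z [hz [h1 h2]]]]] //.
  exact: near_edge hy hxy h.
apply: near_edge hz _ h2; exact: near_edge hy hxy h1.
Qed.

Lemma near_cross x y : x \in A -> y \in A -> near x y -> ~~ wb x y -> Gle x y.
Proof.
move=> hx hy [e|[h|[z [hz [h1 h2]]]]] hc //; first by move: hc; rewrite e wb_refl.
apply: contraT => hn.
have hne := cross_neq hc.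
have hxy : (1 < s x y)%R := cross_s hx hy hc.
have s2 : (1 < s x z)%R := le_s h1.
have s3 : (1 < s y z)%R by rewrite ssym; exact: le_s h2.
have g1 : Ggt x y by rewrite gtE.
have g3 : ~~ Ggt y z by rewrite gt_sym; exact: le_ngt h2.
have [h _] := hR2 hxy s2 s3 g1 (le_ngt h1) g3.
have := hthmax hx hz; rewrite (crossE hx hy hc) in h; lra.
Qed.

Definition K x y : bool := [&& x \in A, y \in A & (if wb x y then Gle x y else Glt x y)].

Lemma K_sym x y : K x y = K y x.
Proof. by rewrite /K wb_sym le_sym lt_sym andbCA. Qed.
Lemma K_le x y : K x y -> Gle x y.
Proof. case/and3P => _ _; case: (wb x y) => //; exact: lt_le. Qed.

Lemma HA x z y : x \in A -> z \in A -> y \in A ->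
  wb x z -> Gle x z -> ~~ wb z y -> Glt z y -> ~~ wb x y -> Glt x y.
Proof.
move=> hx hz hy hwxz hle hczy hlt hcxy; apply: contraT => hn.
have sxz := le_s hle; have szy := lt_s hlt; have sxy := cross_s hx hy hcxy.
have syz : (1 < s y z)%R by rewrite ssym.
have ex := crossE hx hy hcxy; have ezy := crossE hz hy hczy.
move/wbP: hwxz => hw.
case/orP: (hle) => hxz.
  have lyz : Glt y z by rewrite lt_sym.
  have [h _] := hR1 sxy sxz syz hxz lyz hn; lra.
case hg: (Ggt x y).
  have gyz : ~~ Ggt y z by rewrite gt_sym; exact: lt_ngt.
  have [h _] := hR2 sxy sxz syz hg (eq_ngt hxz) gyz.
  lra.
have hexy : Geq x y.
  have hne := cross_neq hcxy.
  by case: (part hne) => [[]|[]|[]]; rewrite ?hg ?(negbTE hn).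
exfalso.
have a2 : (1 < s z x)%R by rewrite ssym.
have a3 : (1 < s y x)%R by rewrite ssym.
have e1 : Geq z x by rewrite eq_sym'.
have e2 : Geq y x by rewrite eq_sym'.
have e3 : ~~ Geq z y := lt_neq hlt.
apply: (hF szy a2 a3 e1 e2 e3).
rewrite (ssym z x) ezy ex; split => //; lra.
Qed.

Lemma HB x p q : x \in A -> p \in A -> q \in A ->
  ~~ wb x p -> ~~ wb p q -> ~~ wb x q -> Glt x p -> Glt p q -> Glt x q.
Proof.
move=> hx hp hq c1 c2 c3 l1 l2; apply: contraT => hn.
have sqp : (1 < s q p)%R by rewrite ssym; exact: cross_s hp hq c2.
have lqp : Glt q p by rewrite lt_sym.
have [h _] := hR1 (cross_s hx hq c3) (cross_s hx hp c1) sqp l1 lqp hn.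
rewrite (crossE hx hq c3) (crossE hx hp c1) in h; lra.
Qed.

Lemma HC x p q y : x \in A -> p \in A -> q \in A -> y \in A ->
  Glt x p -> Glt p q -> Glt q y -> wb x q -> wb p y -> ~~ wb x p -> ~~ wb x y -> Glt x y.
Proof.
move=> hx hp hq hy l1 l2 l3 w1 w2 c1 c2; apply: contraT => hn.
have cqy : ~~ wb q y by apply: wb_cross hq hy _ c2; rewrite wb_sym.
have cpx : ~~ wb p x by rewrite wb_sym.
have cyx : ~~ wb y x by rewrite wb_sym.
case hxq: (Glt x q).
  by rewrite (HA hx hq hy w1 (lt_le hxq) cqy l3 c2) in hn.
case hpy: (Glt p y).
  have wyp : wb y p by rewrite wb_sym.
  have lyp : Gle y p by rewrite le_sym; exact: lt_le.
  have lpx : Glt p x by rewrite lt_sym.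
  have := HA hy hp hx wyp lyp cpx lpx cyx.
  by rewrite lt_sym (negbTE hn).
exfalso.
have ne : forall u v : L, u <> v -> u != v by move=> u v h; apply/eqP.
have hxp := cross_neq c1; have hxy := cross_neq c2; have hqy := cross_neq cqy.
have hpq : p <> q by move=> e; by rewrite e lt_irr in l2.
have hxq' : x <> q by move=> e; rewrite e l3 in hn.
have hpy' : p <> y by move=> e; rewrite -e l1 in hn.
have U : uniq [:: x; p; q; y].
  rewrite /= !inE !negb_or (ne _ _ hxp) (ne _ _ hxq') (ne _ _ hxy) (ne _ _ hpq) (ne _ _ hpy').
  by rewrite (ne _ _ hqy).
have HH := hcl U; apply: HH.
rewrite hxq hpy (negbTE hn); by do !split.
Qed.

Definition Inv x p : Prop := p \in A /\ (~~ wb x p -> Glt x p) /\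
  (wb x p -> forall y, y \in A -> ~~ wb x y -> Glt p y -> Glt x y).

Lemma Inv_step x p q : x \in A -> Inv x p -> K p q -> Inv x q.
Proof.
move=> hx [hp [I1 I2]] /and3P [_ hq hK].
split => //.
case hw: (wb p q) hK => hK.
  case hxp: (wb x p).
    have hxq : wb x q := wb_trans hxp hw.
    split; first by rewrite hxq.
    move=> _ y hy hcy hqy.
    have hcqy : ~~ wb q y by apply: wb_cross hq hy _ hcy; rewrite wb_sym.
    have hcpy : ~~ wb p y by apply: wb_cross hp hy hw hcqy.
    apply: I2 => //; exact: HA hp hq hy hw hK hcqy hqy hcpy.
  have hcxq : ~~ wb x q.
    rewrite wb_sym; apply: (wb_cross (y:=p)) hq hx _ _; first by rewrite wb_sym.
    by rewrite wb_sym hxp.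
  split; last by rewrite (negbTE hcxq).
  move=> _; rewrite lt_sym.
  apply: HA hq hp hx _ _ _ _ _.
  - by rewrite wb_sym.
  - by rewrite le_sym.
  - by rewrite wb_sym hxp.
  - rewrite lt_sym; apply: I1; by rewrite hxp.
  - by rewrite wb_sym.
have hcpq : ~~ wb p q by rewrite hw.
case hxp: (wb x p).
  have hcxq : ~~ wb x q by apply: wb_cross hx hq hxp hcpq.
  split; last by rewrite (negbTE hcxq).
  move=> _; exact: I2.
have hcxp : ~~ wb x p by rewrite hxp.
have lxp := I1 hcxp.
case hxq: (wb x q).
  split; first by [].
  move=> _ y hy hcy hqy.
  have hcqy : ~~ wb q y by apply: wb_cross hq hy _ hcy; rewrite wb_sym.
  case hpy: (wb p y).
    exact: HC hx hp hq hy lxp hK hqy hxq hpy hcxp hcy.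
  have lpy : Glt p y := HB hp hq hy hcpq hcqy (negbT hpy) hK hqy.
  exact: HB hx hp hy hcxp (negbT hpy) hcy lxp lpy.
split; last by [].
move=> _; exact: HB hx hp hq hcxp hcpq (negbT hxq) lxp hK.
Qed.

Lemma path_Inv x p z : x \in A -> Inv x z -> path K z p -> Inv x (last z p).
Proof.
move=> hx; elim: p z => [|a p IH] z Iz //= /andP [hza hpa].
apply: IH hpa; exact: Inv_step hx Iz hza.
Qed.

Lemma conn_Inv x y : x \in A -> connect K x y -> Inv x y.
Proof.
move=> hx /connectP [p hp ->].
have I0 : Inv x x.
  split => //; split; first by rewrite wb_refl.
  by move=> _ w hw _.
exact: (path_Inv hx I0 hp).
Qed.

Lemma conn_lt x y : x \in A -> connect K x y -> ~~ wb x y -> Glt x y.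
Proof. by move=> hx hc; case: (conn_Inv hx hc) => _ [h _]. Qed.

Lemma conn_mem x y : x \in A -> connect K x y -> y \in A.
Proof. by move=> hx hc; case: (conn_Inv hx hc). Qed.

Lemma path_near x p z : z \in A -> near x z -> path K z p -> near x (last z p).
Proof.
elim: p z => [|a p IH] z hz hn //= /andP [hza hpa].
have ha : a \in A by case/and3P: hza.
apply: IH ha _ hpa; exact: near_edge hz hn (K_le hza).
Qed.

Lemma conn_near x y : x \in A -> connect K x y -> near x y.
Proof.
move=> hx /connectP [p hp ->]; apply: path_near hx _ hp; by left.
Qed.

Lemma conn_symE x y : connect K x y = connect K y x.
Proof. apply: sym_connect_sym => u v; exact: K_sym. Qed.

End Level.

Definition Spec (A : {set L}) (be : R) (t : L -> L -> R) : Prop :=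
  (forall x, x \in A -> t x x = 1%R) /\
  (forall x y, x \in A -> y \in A -> t x y = t y x) /\
  (forall x y z, x \in A -> y \in A -> z \in A -> (t x z <= Rmax (t x y) (t y z))%R) /\
  (forall x y, x \in A -> y \in A -> x <> y -> (1 < t x y)%R /\ (t x y < be)%R) /\
  (forall x y, x \in A -> y \in A -> x <> y ->
     (Glt x y -> (t x y < s x y)%R) /\ (Geq x y -> t x y = s x y) /\ (Ggt x y -> (s x y < t x y)%R)).

Lemma signs_lt x y (a b c : Prop) : Glt x y -> a -> (Glt x y -> a) /\ (Geq x y -> b) /\ (Ggt x y -> c).
Proof.
move=> h ha; split => // ; split => h2.
  by move: (lt_neq h); rewrite h2.
by move: (lt_ngt h); rewrite h2.
Qed.
Lemma signs_eq x y (a b c : Prop) : Geq x y -> b -> (Glt x y -> a) /\ (Geq x y -> b) /\ (Ggt x y -> c).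
Proof.
move=> h hb; split; last split => // h2.
  move=> h2; by move: (lt_neq h2); rewrite h.
by move: (eq_ngt h); rewrite h2.
Qed.
Lemma signs_gt x y (a b c : Prop) : Ggt x y -> c -> (Glt x y -> a) /\ (Geq x y -> b) /\ (Ggt x y -> c).
Proof.
move=> h hc; split; last split => // h2.
  move=> h2; by move: (lt_ngt h2); rewrite h.
by move: (eq_ngt h2); rewrite h.
Qed.

Lemma base_spec (A : {set L}) be : (forall x y, x \in A -> y \in A -> (s x y <= 1)%R) ->
  (forall x y, x \in A -> y \in A -> (s x y < be)%R) -> exists t, Spec A be t.
Proof.
move=> h1 hb.
exists (fun x y => if x == y then 1%R else ((1 + be) / 2)%R).
split; first by move=> x _; rewrite eqxx.
split; first by move=> x y _ _; rewrite eq_sym.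
split.
  move=> x y z hx hy hz.
  have hbe : (1 < be)%R by have := hb x x hx hx; rewrite sdiag.
  case: (x =P z) => [_|hxz].
    case: (x == y); case: (y == z); rewrite /Rmax; case: Rle_dec => _; lra.
  case: (x =P y) => [e|_]; last by apply: Rmax_l.
  subst y; case: (x =P z) => // _; exact: Rmax_r.
split.
  move=> x y hx _ hne; have hbe : (1 < be)%R by have := hb x x hx hx; rewrite sdiag.
  case: (x =P y) => // _; lra.
move=> x y hx hy hne.
have hbe : (1 < be)%R by have := hb x x hx hx; rewrite sdiag.
have hs : s x y = 1%R by have := h1 x y hx hy; have := sge1 x y; lra.
have hg : Ggt x y.
  rewrite gtE //; apply/negP => hle; have := hP hne hle; lra.
apply: signs_gt => //; case: (x =P y) => // _; lra.
Qed.

Lemma step_spec (A : {set L}) be :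
  (exists a b, a \in A /\ b \in A /\ (1 < s a b)%R) ->
  (forall x y, x \in A -> y \in A -> (s x y < be)%R) ->
  (forall (B : {set L}) be', #|B| < #|A| -> (forall x y, x \in B -> y \in B -> (s x y < be')%R) ->
     exists t, Spec B be' t) ->
  exists t, Spec A be t.
Proof.
move=> [a0 [b0 [ha0 [hb0 hab0]]]] hbe IH.
pose thA := foldr (fun p m => Rmax (s p.1 p.2) m) 1%R (enum (setX A A)).
have thge : forall x y, x \in A -> y \in A -> (s x y <= thA)%R.
  move=> x y hx hy; apply: (@foldmax_ge _ (fun p => s p.1 p.2) _ _ (x, y)).
  apply/In_mem; by rewrite mem_enum in_setX hx hy.
have [a [b [ha [hb hthab]]]] : exists a b, a \in A /\ b \in A /\ s a b = thA.
  case: (@foldmax_att _ (fun p => s p.1 p.2) (enum (setX A A)) 1%R) => [e|[[p1 p2] [hp e]]].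
    have := thge a0 b0 ha0 hb0; rewrite /thA e; lra.
  move/In_mem: hp; rewrite mem_enum in_setX => /andP [h1 h2]; by exists p1, p2; rewrite /thA e.
have th1 : (1 < thA)%R by have := thge a0 b0 ha0 hb0; lra.
have thb : (thA < be)%R by rewrite -hthab; exact: hbe.
pose m := foldr (fun p m => Rmax (if Rltb (s p.1 p.2) thA then s p.1 p.2 else 1%R) m) 1%R (enum (setX A A)).
have mge : forall x y, x \in A -> y \in A -> (s x y < thA)%R -> (s x y <= m)%R.
  move=> x y hx hy hlt.
  have := @foldmax_ge _ (fun p => if Rltb (s p.1 p.2) thA then s p.1 p.2 else 1%R) _ 1%R (x, y).
  rewrite /=; case: RltbP => // _; apply; apply/In_mem; by rewrite mem_enum in_setX hx hy.
have [m1 mth] : (1 <= m)%R /\ (m < thA)%R.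
  case: (@foldmax_att _ (fun p => if Rltb (s p.1 p.2) thA then s p.1 p.2 else 1%R) (enum (setX A A)) 1%R)
    => [e|[p [_ e]]]; rewrite /m e; first lra.
  case: RltbP => h; have := sge1 p.1 p.2; lra.
pose ga := ((thA + m) / 2)%R.
pose th' := ((thA + be) / 2)%R.
have ga1 : (m < ga)%R by rewrite /ga; lra.
have ga2 : (ga < thA)%R by rewrite /ga; lra.
have th'1 : (thA < th')%R by rewrite /th'; lra.
have th'2 : (th' < be)%R by rewrite /th'; lra.
pose KK := K A thA.
pose Wr x y := connect KK x y && wb thA x y.
pose W x := [set y in A | Wr x y].
have Wr_sym : forall x y, Wr x y = Wr y x.
  move=> x y; by rewrite /Wr conn_symE wb_sym.
have Wr_trans : forall x y z, Wr x y -> Wr y z -> Wr x z.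
  move=> x y z /andP [c1 w1] /andP [c2 w2]; apply/andP; split.
    exact: connect_trans c1 c2.
  exact: wb_trans w1 w2.
have W_eq : forall x y, Wr x y -> W y = W x.
  move=> x y hxy; apply/setP => z; rewrite !inE.
  case: (z \in A) => //=; apply/idP/idP => h.
    exact: Wr_trans hxy h.
  by apply: Wr_trans h; rewrite Wr_sym.
have Wlt : forall x, x \in A -> #|W x| < #|A|.
  move=> x hx; apply: proper_card; apply/properP; split.
    by apply/subsetP => y; rewrite inE => /andP [].
  have : ~~ wb thA x a || ~~ wb thA x b.
    apply: contraT => /norP [/negPn /wbP h1 /negPn /wbP h2].
    have := sult a x b; rewrite (ssym a x) hthab; have := Rmax_lub_lt _ _ _ h1 h2; lra.
  case/orP => h; [exists a | exists b] => //; rewrite inE; apply/negP => /andP [_ /andP [_ hw]];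
    by rewrite hw in h.
have Wsm : forall x y z, x \in A -> y \in W x -> z \in W x -> (s y z < ga)%R.
  move=> x y z hx; rewrite !inE => /andP [hy /andP [_ w1]] /andP [hz /andP [_ w2]].
  have w3 : wb thA y z by apply: wb_trans w2; rewrite wb_sym.
  move/wbP: (w3) => h; have := mge _ _ hy hz h; lra.
have tWex : forall B : {set L}, exists t : L -> L -> R,
    (#|B| < #|A| /\ forall y z, y \in B -> z \in B -> (s y z < ga)%R) -> Spec B ga t.
  move=> B; case: (classic (#|B| < #|A| /\ forall y z, y \in B -> z \in B -> (s y z < ga)%R)).
    move=> [h1 h2]; have [t ht] := IH B ga h1 h2; by exists t.
  move=> hn; exists (fun _ _ => 0%R) => h; by case: hn.
pose tW B := proj1_sig (constructive_indefinite_description _ (tWex B)).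
have hSW : forall x, x \in A -> Spec (W x) ga (tW (W x)).
  move=> x hx; rewrite /tW; case: constructive_indefinite_description => t /= ht; apply: ht.
  split; [exact: Wlt | move=> y z; exact: Wsm].
pose u1 x y := tW (W x) x y.
pose v1 x y := if Wr x y then u1 x y else ga.
pose v2 x y := if connect KK x y then v1 x y else thA.
pose v3 x y := if pb (near A x y) then v2 x y else th'.
have inW : forall x y, x \in A -> y \in A -> Wr x y -> y \in W x.
  by move=> x y _ hy h; rewrite inE hy.
have Wself : forall x, x \in A -> x \in W x.
  move=> x hx; rewrite inE hx /Wr connect0 /=; exact: wb_refl.
have u1le : forall x y, x \in A -> y \in A -> Wr x y -> (u1 x y <= ga)%R.
  move=> x y hx hy h; case: (hSW x hx) => [d1 [_ [_ [bd _]]]].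
  case: (x =P y) => [<-|hne].
    rewrite /u1 d1 //; [lra | exact: Wself].
  have [_ h2] := bd x y (Wself x hx) (inW x y hx hy h) hne; rewrite /u1; lra.
have near_tr : forall x y z, x \in A -> y \in A -> z \in A -> pb (near A x y) -> pb (near A y z) -> pb (near A x z).
  move=> x y z hx hy hz /pbP h1 /pbP h2; apply/pbP; exact: near_trans hy hz h1 h2.
have conn_tr : forall x y z, x \in A -> y \in A -> z \in A -> connect KK x y -> connect KK y z -> connect KK x z.
  move=> x y z _ _ _; exact: connect_trans.
have ult1 : forall x y z, x \in A -> y \in A -> z \in A -> (v1 x z <= Rmax (v1 x y) (v1 y z))%R.
  apply: step_ultra.
  - move=> x y z _ _ _; exact: Wr_trans.
  - move=> x y z hx hy hz hxy hyz hxz.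
    have e1 : W y = W x := W_eq x y hxy.
    case: (hSW x hx) => [_ [_ [hu _]]].
    rewrite /u1 e1; apply: hu; [exact: Wself | exact: inW | ].
    exact: inW hx hz hxz.
  - exact: u1le.
have v1le : forall x y, x \in A -> y \in A -> (v1 x y <= thA)%R.
  move=> x y hx hy; rewrite /v1; case: ifP => h; last lra.
  have := u1le x y hx hy h; lra.
have ult2 : forall x y z, x \in A -> y \in A -> z \in A -> (v2 x z <= Rmax (v2 x y) (v2 y z))%R.
  apply: step_ultra; first exact: conn_tr.
    move=> x y z hx hy hz _ _ _; exact: ult1.
  move=> x y hx hy _; exact: v1le.
have v2le : forall x y, x \in A -> y \in A -> (v2 x y <= th')%R.
  move=> x y hx hy; rewrite /v2; case: ifP => h; last lra.
  have := v1le x y hx hy; lra.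
have ult3 : forall x y z, x \in A -> y \in A -> z \in A -> (v3 x z <= Rmax (v3 x y) (v3 y z))%R.
  apply: step_ultra; first exact: near_tr.
    move=> x y z hx hy hz _ _ _; exact: ult2.
  move=> x y hx hy _; exact: v2le.
have pbnear_sym : forall x y, pb (near A x y) = pb (near A y x).
  move=> x y; apply/pbP/pbP; exact: near_sym.
exists v3.
split.
  move=> x hx; rewrite /v3 /v2 /v1.
  have -> : pb (near A x x) by apply/pbP; left.
  rewrite connect0.
  have -> : Wr x x by rewrite /Wr connect0 wb_refl.
  case: (hSW x hx) => [d1 _]; rewrite /u1 d1 //; exact: Wself.
split.
  move=> x y hx hy; rewrite /v3 /v2 /v1 pbnear_sym (conn_symE _ _ x y) Wr_sym.
  case hw: (Wr y x) => //.
  rewrite /u1 (W_eq y x hw); case: (hSW y hy) => [_ [hs _]].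
  rewrite (hs x y) //; [exact: inW hy hx hw | exact: Wself].
split; first exact: ult3.
have main : forall x y, x \in A -> y \in A -> x <> y ->
    ((1 < v3 x y)%R /\ (v3 x y < be)%R) /\
    ((Glt x y -> (v3 x y < s x y)%R) /\ (Geq x y -> v3 x y = s x y) /\ (Ggt x y -> (s x y < v3 x y)%R)).
  move=> x y hx hy hne.
  have hsle := thge x y hx hy.
  rewrite /v3; case: pbP => hnear; last first.
    have hg : Ggt x y.
      rewrite gtE //; apply/negP => h; apply: hnear; by right; left.
    split; first by split; lra.
    apply: signs_gt => //; lra.
  rewrite /v2; case hc: (connect KK x y); last first.
    have hK : ~~ KK x y by apply/negP => h; rewrite (connect1 h) in hc.
    split; first by split; lra.
    case hw: (wb thA x y).
      have hg : Ggt x y.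
        rewrite gtE //; apply/negP => h; move: hK; by rewrite /KK /K hx hy hw h.
      apply: signs_gt => //; by move/wbP: hw.
    have hle : Gle x y := near_cross th1 thge hx hy hnear (negbT hw).
    have heq : Geq x y.
      move: hle; rewrite /Gle; case/orP => // hl; move: hK; by rewrite /KK /K hx hy hw hl.
    apply: signs_eq => //; by rewrite (crossE thge hx hy (negbT hw)).
  rewrite /v1; case hW: (Wr x y); last first.
    have hcw : ~~ wb thA x y by move: hW; rewrite /Wr hc /= => ->.
    have hl : Glt x y := conn_lt th1 thge hx hc hcw.
    split; first by split; lra.
    apply: signs_lt => //; by rewrite (crossE thge hx hy hcw).
  case: (hSW x hx) => [_ [_ [_ [bd sg]]]].
  have hyW := inW x y hx hy hW.
  have [b1 b2] := bd x y (Wself x hx) hyW hne.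
  split; first by split; rewrite /u1; lra.
  exact: sg (Wself x hx) hyW hne.
split.
  move=> x y hx hy hne; by case: (main x y hx hy hne).
move=> x y hx hy hne; by case: (main x y hx hy hne).
Qed.

Lemma core_ex n : forall (A : {set L}) be, #|A| <= n ->
  (forall x y, x \in A -> y \in A -> (s x y < be)%R) -> exists t, Spec A be t.
Proof.
elim: n => [|n IH] A be hn hb.
  apply: base_spec => // x y hx; exfalso.
  have : 0 < #|A| by apply/card_gt0P; exists x.
  by rewrite leqn0 in hn; rewrite (eqP hn).
case: (classic (exists a b, a \in A /\ b \in A /\ (1 < s a b)%R)) => h.
  apply: step_spec => // B be' hB hb'; apply: IH => //.
  by rewrite -ltnS; apply: leq_trans hB hn.
apply: base_spec => // x y hx hy; apply: Rnot_lt_le => hl; apply: h; by exists x, y.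
Qed.
End Core.

Section Ultra.
Variables (L : finType) (v : L -> L -> R).
Hypothesis vsym : forall x y, v x y = v y x.
Hypothesis vult : forall x y z, (v x z <= Rmax (v x y) (v y z))%R.

Lemma tri a b c : (v a c < Rmax (v a b) (v b c))%R -> v a b = v b c /\ (v a c < v a b)%R.
Proof.
move=> h.
have h1 := vult b a c; have h2 := vult a c b.
rewrite (vsym b a) in h1; rewrite (vsym c b) in h2.
move: h h1 h2; case: (Rmax_cases (v a b) (v b c)) => ->;
  case: (Rmax_cases (v a b) (v a c)) => ->; case: (Rmax_cases (v a c) (v b c)) => ->;
  move=> *; split; lra.
Qed.

Lemma ult_eq_top a b c : (v a b < v a c)%R -> v a c = v c b.
Proof.
move=> h; have h1 := ult_ge (vult a b c) h.
have h2 := vult b a c; rewrite (vsym b a) Rmax_right in h2; last lra.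
rewrite (vsym c b); lra.
Qed.
End Ultra.

Lemma P4_free (L : finType) (u v : L -> L -> R) (G : rel L) :
  (forall x y, u x y = u y x) -> (forall x y z, (u x z <= Rmax (u x y) (u y z))%R) ->
  (forall x y, v x y = v y x) -> (forall x y z, (v x z <= Rmax (v x y) (v y z))%R) ->
  (forall x y, G x y <-> x <> y /\ (u x y < v x y)%R) -> cograph G.
Proof.
move=> us uu vs vu hG a b c d U [gab [gbc [gcd [nac [nbd nad]]]]].
move: U => /= /andP [ha /andP [hb /andP [hc _]]].
have nin : forall (x y : L) (s : seq L), x \notin s -> y \in s -> x <> y.
  by move=> x y s hs hy e; subst; rewrite hy in hs.
have ac : a <> c by apply: nin ha _; rewrite !inE eqxx orbT.
have ad : a <> d by apply: nin ha _; rewrite !inE eqxx !orbT.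
have bd : b <> d by apply: nin hb _; rewrite !inE eqxx !orbT.
have lt : forall x y, G x y -> (u x y < v x y)%R by move=> x y /hG [].
have ge : forall x y, x <> y -> ~ G x y -> (v x y <= u x y)%R.
  move=> x y hxy hn; apply: Rnot_lt_le => h; apply: hn; by apply/hG.
have l1 := lt _ _ gab; have l2 := lt _ _ gbc; have l3 := lt _ _ gcd.
have g1 := ge _ _ ac nac; have g2 := ge _ _ bd nbd; have g3 := ge _ _ ad nad.
have hac : (v a c < Rmax (v a b) (v b c))%R.
  apply: Rle_lt_trans g1 _; apply: Rle_lt_trans (uu a b c) _.
  apply: Rmax_lub_lt; [apply: Rlt_le_trans l1 (Rmax_l _ _) | apply: Rlt_le_trans l2 (Rmax_r _ _)].
have [e1 s1] := tri vs vu hac.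
have hbd : (v b d < Rmax (v b c) (v c d))%R.
  apply: Rle_lt_trans g2 _; apply: Rle_lt_trans (uu b c d) _.
  apply: Rmax_lub_lt; [apply: Rlt_le_trans l2 (Rmax_l _ _) | apply: Rlt_le_trans l3 (Rmax_r _ _)].
have [e2 s2] := tri vs vu hbd.
have h3 := vu c a d; rewrite (vs c a) in h3.
have h4 : (v c d <= v a d)%R.
  apply: ult_ge h3 _; lra.
have h5 := uu b c d; have h6 := uu a b d.
have h7 : (Rmax (u b c) (u c d) < v b c)%R by apply: Rmax_lub_lt; lra.
have h8 : (Rmax (u a b) (u b d) < v a b)%R by apply: Rmax_lub_lt; lra.
lra.
Qed.

Lemma fin_argmax (T : finType) (P : pred T) (f : T -> R) :
  (exists a, P a) -> exists w, P w /\ forall z, P z -> (f z <= f w)%R.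
Proof.
move=> [a ha].
suff : forall s : seq T, (exists2 a, a \in s & P a) ->
    exists w, P w /\ forall z, z \in s -> P z -> (f z <= f w)%R.
  move=> /(_ (enum T)) [|w [hw hm]]; first by exists a; rewrite ?mem_enum.
  exists w; split => // z hz; apply: hm => //; by rewrite mem_enum.
elim=> [|b s IH] [c]; first by [].
rewrite in_cons => hc hPc.
case: (excluded_middle_informative (exists2 a, a \in s & P a)) => [hex|hn].
  have [w [hw hm]] := IH hex.
  case hb: (P b).
    case: (Rle_dec (f b) (f w)) => h.
      exists w; split => // z; rewrite in_cons => /orP [/eqP ->|hz] hz'; [done | exact: hm].
    exists b; split => // z; rewrite in_cons => /orP [/eqP ->|hz] hz'; first lra.
    have := hm z hz hz'; lra.
  exists w; split => // z; rewrite in_cons => /orP [/eqP ->|hz] hz'; [by rewrite hb in hz' | exact: hm].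
have hb : P b.
  case/orP: hc => [/eqP <- //|hcs]; exfalso; apply: hn; by exists c.
exists b; split => // z; rewrite in_cons => /orP [/eqP ->|hz] hz'; first lra.
exfalso; apply: hn; by exists z.
Qed.

Lemma scen_graphE (L M VT VS : finType) (T : ptree VT) (lfT : L -> VT) (S : ptree VS)
  (lfS : M -> VS) (sigma : L -> M) (tT : VT -> R) (tS : VS -> R) (cmp : R -> R -> Prop) x y :
  scen_graph T lfT S lfS sigma tT tS cmp x y <->
  x <> y /\ cmp (tT (lcaf T (lfT x) (lfT y))) (tS (lcaf S (lfS (sigma x)) (lfS (sigma y)))).
Proof.
split.
  move=> [hne [u [w [hu [hw hc]]]]]; split => //; by rewrite (lcafE hu) (lcafE hw).
move=> [hne hc]; split => //; exists (lcaf T (lfT x) (lfT y)), (lcaf S (lfS (sigma x)) (lfS (sigma y))).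
split; first exact: lcafP. split; first exact: lcafP. done.
Qed.

Section Search.
Variables (V : finType) (S : ptree V) (tau : V -> R).
Hypothesis ht : time_map S tau.

Lemma anc_search m0 th : (tau m0 < th)%R -> (th < tau (pt0 S))%R ->
  exists w, preceq S m0 w /\ w <> pt0 S /\ (tau w < th)%R /\ (th <= tau (ptpar S w))%R.
Proof.
move=> h1 h2.
have [w [/andP [/pbP hw /RltbP hwt] hmax]] :=
  @fin_argmax V (fun w => pb (preceq S m0 w) && Rltb (tau w) th) tau
    (ex_intro _ m0 (introT andP (conj (introT (pbP _) (pre_refl S m0)) (introT (RltbP _ _) h1)))).
have hw0 : w <> pt0 S by move=> e; rewrite e in hwt; lra.
exists w; split => //; split => //; split => //.
apply: Rnot_lt_le => hlt.
have hp : prec S w (ptpar S w) := prec_par hw0.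
have := ht hp.
have := hmax (ptpar S w); rewrite (introT (pbP _) (pre_trans hw (pre_par S w))) /=.
move/(_ (introT (RltbP _ _) hlt)); lra.
Qed.

Lemma desc_time : time_map S (fun v => INR #|desc S v|).
Proof. move=> x y h; apply: lt_INR; apply/ltP; exact: proper_card (desc_proper h). Qed.

Lemma desc_leaf x : is_leaf S x -> #|desc S x| = 1.
Proof.
move=> hl; have -> : desc S x = [set x].
  apply/setP => z; rewrite !inE; apply/pbP/eqP => [h|->]; [exact: leaf_min hl h | exact: pre_refl].
exact: cards1.
Qed.
End Search.

Lemma F_core (L : finType) (tt ss : L -> L -> R) :
  (forall x y, tt x y = tt y x) -> (forall x y z, (tt x z <= Rmax (tt x y) (tt y z))%R) ->
  (forall x y, ss x y = ss y x) ->
  forall x y z, tt x z = ss x z -> tt y z = ss y z -> tt x y <> ss x y ->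
  ~ ((ss x z < ss x y)%R /\ ss x y = ss z y).
Proof.
move=> ts tu ssy x y z e1 e2 ne [h1 h2].
have h3 : (tt z x < tt z y)%R by rewrite (ts z x) (ts z y) e1 e2 (ssy y z) -h2.
have := ult_eq_top ts tu h3; rewrite (ts y x) => e3.
apply: ne; rewrite -e3 (ts z y) e2 (ssy y z); done.
Qed.

Lemma Rmax_mono a b c d : (a <= c)%R -> (b <= d)%R -> (Rmax a b <= Rmax c d)%R.
Proof.
move=> h1 h2; apply: Rmax_lub; [apply: Rle_trans h1 (Rmax_l _ _) | apply: Rle_trans h2 (Rmax_r _ _)].
Qed.

Lemma necessity (L M : finType) (Glt Geq Ggt : rel L) (sigma : L -> M)
  (HL : 0 < #|L|) (H3 : graph3partition Glt Geq Ggt) :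
  explained_by_relaxed_scenario Glt Geq Ggt sigma ->
  [/\ properly_colored Glt sigma, properly_colored Geq sigma,
      cograph Glt, cograph Ggt &
      triples_consistent (RS Glt Geq Ggt sigma) (FS Glt Geq Ggt sigma)].
Proof.
move=> [VT [VS [T [lfT [S [lfS [mu [tT [tS [hsc [hlt [heq hgt]]]]]]]]]]]].
case: hsc => [plT [plS [[injT leafT] [[injS leafS] [timeT [timeS [hinr [hS0 [hS1 [hmul [hS2 hS3]]]]]]]]]]].
pose tt x y := tT (lcaf T (lfT x) (lfT y)).
pose ss x y := tS (lcaf S (lfS (sigma x)) (lfS (sigma y))).
have ltE : forall x y, Glt x y <-> x <> y /\ (tt x y < ss x y)%R.
  move=> x y; rewrite hlt; exact: scen_graphE.
have eqE : forall x y, Geq x y <-> x <> y /\ tt x y = ss x y.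
  move=> x y; rewrite heq; exact: scen_graphE.
have gtE : forall x y, Ggt x y <-> x <> y /\ (ss x y < tt x y)%R.
  move=> x y; rewrite hgt; exact: scen_graphE.
have lT : forall x, is_leaf T (lfT x) by move=> x; apply/leafT; exists x.
have ltime : forall x, tT (lfT x) = tS (lfS (sigma x)).
  move=> x; symmetry; exact: hS2 (hmul x).
have tts : forall x y, tt x y = tt y x by move=> x y; rewrite /tt lcafC.
have ssy : forall x y, ss x y = ss y x by move=> x y; rewrite /ss lcafC.
have ttu : forall x y z, (tt x z <= Rmax (tt x y) (tt y z))%R.
  move=> x y z; exact: lca_ultra timeT _ _ _.
have ssu : forall x y z, (ss x z <= Rmax (ss x y) (ss y z))%R.
  move=> x y z; exact: lca_ultra timeS _ _ _.
have samecol : forall x y, x <> y -> sigma x = sigma y -> (ss x y < tt x y)%R.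
  move=> x y hne e; rewrite /ss -e lcaf_self -ltime /tt.
  have hh : lfT x <> lfT y by move=> h; apply: hne; exact: injT h.
  exact: (leaf_lca_strict timeT (lT x) hh (lT y)).
have [l0 _] : exists l0 : L, l0 \in L by apply/card_gt0P.
split.
- move=> x y /ltE [hne h] e; have := samecol x y hne e; lra.
- move=> x y /eqE [hne h] e; have := samecol x y hne e; lra.
- exact: (P4_free tts ttu ssy ssu ltE).
- exact: (P4_free ssy ssu tts ttu gtE).
pose dM X Y := tS (lcaf S (lfS X) (lfS Y)).
have dsym : forall X Y, dM X Y = dM Y X by move=> X Y; rewrite /dM lcafC.
have dult : forall X Y Z, (dM X Z <= Rmax (dM X Y) (dM Y Z))%R.
  move=> X Y Z; exact: lca_ultra timeS _ _ _.
have dpos : forall X Y, X <> Y -> (dM X X < dM X Y)%R.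
  move=> X Y hne; rewrite /dM lcaf_self.
  have hh : lfS X <> lfS Y by move=> h; apply: hne; exact: injS h.
  exact: (leaf_lca_strict timeS (leafS X) hh (leafS Y)).
have dtop : forall X Y, (dM X Y < tS (pt0 S) + 1)%R.
  move=> X Y; have := tau_mono timeS (pre_p0 S (lcaf S (lfS X) (lfS Y))); rewrite /dM; lra.
have [V [U [lf [tau [plU [injU [leafU [timeU [_ hlcaU]]]]]]]]] :=
  build_tree (sigma l0) dsym dult dpos dtop.
exists V, U, lf; split; first exact: plU.
split; first exact: injU.
split; first exact: leafU.
split.
  move=> X Y Z [x [y [z [ex [ey [ez [[dXY [dXZ dYZ]] hc]]]]]]].
  apply/(displays_iff timeU); rewrite !hlcaU; subst X Y Z.
  have nxy : x <> y by move=> e; apply: dXY; rewrite e.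
  have nxz : x <> z by move=> e; apply: dXZ; rewrite e.
  have nyz : y <> z by move=> e; apply: dYZ; rewrite e.
  suff : (ss x y < Rmax (ss x z) (ss z y))%R.
    move/(tri ssy ssu) => [e1 e2]; rewrite /ss /dM in e1 e2 *; rewrite e1 in e2 *; split => //.
    by rewrite lcafC.
  case: hc => [[l1 [l2 n3]]|[g1 [n2 n3]]].
    have [_ h1] := (ltE x z).1 l1; have [_ h2] := (ltE y z).1 l2.
    have h3 : (ss x y <= tt x y)%R.
      apply: Rnot_lt_le => h; apply: n3; by apply/ltE.
    apply: Rle_lt_trans h3 _; apply: Rle_lt_trans (ttu x z y) _.
    rewrite (tts z y) (ssy z y); apply: Rmax_lub_lt.
      apply: Rlt_le_trans h1 (Rmax_l _ _).
    apply: Rlt_le_trans h2 (Rmax_r _ _).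
  have [_ h1] := (gtE x y).1 g1.
  have h2 : (tt x z <= ss x z)%R by apply: Rnot_lt_le => h; apply: n2; by apply/gtE.
  have h3 : (tt y z <= ss y z)%R by apply: Rnot_lt_le => h; apply: n3; by apply/gtE.
  apply: Rlt_le_trans h1 _; apply: Rle_trans (ttu x z y) _.
  rewrite (tts z y) (ssy z y); exact: Rmax_mono.
move=> A B C [x [y [z [[dxy [dxz dyz]] [hxz [hyz [hnxy hABC]]]]]]] hd.
move/(displays_iff timeU): hd; rewrite !hlcaU.
have nxy : x <> y by move=> e; apply: dxy; rewrite e.
have [_ e1] := (eqE x z).1 hxz; have [_ e2] := (eqE y z).1 hyz.
have ne : tt x y <> ss x y by move=> e; apply: hnxy; apply/eqE.
case: hABC => [[-> -> ->]|[-> -> ->]].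
  exact: (F_core tts ttu ssy e1 e2 ne).
apply: (F_core tts ttu ssy e2 e1); by rewrite tts ssy.
Qed.

Lemma sufficiency (L M : finType) (Glt Geq Ggt : rel L) (sigma : L -> M)
  (HL : 0 < #|L|) (H3 : graph3partition Glt Geq Ggt) :
  [/\ properly_colored Glt sigma, properly_colored Geq sigma,
      cograph Glt, cograph Ggt &
      triples_consistent (RS Glt Geq Ggt sigma) (FS Glt Geq Ggt sigma)] ->
  explained_by_relaxed_scenario Glt Geq Ggt sigma.
Proof.
case=> pc1 pc2 hcl hcg [V0 [S0 [lf0 [plS [injS [leafS [hR hF]]]]]]].
have [l0 _] : exists l0 : L, l0 \in L by apply/card_gt0P.
pose tS v := INR #|desc S0 v|.
have timeS : time_map S0 tS := @desc_time _ S0.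
have lS : forall m, is_leaf S0 (lf0 m) by move=> m; apply/leafS; exists m.
have tleaf : forall m, tS (lf0 m) = 1%R by move=> m; rewrite /tS (desc_leaf (lS m)).
pose s x y := tS (lcaf S0 (lf0 (sigma x)) (lf0 (sigma y))).
have ssym : forall x y, s x y = s y x by move=> x y; rewrite /s lcafC.
have sult : forall x y z, (s x z <= Rmax (s x y) (s y z))%R.
  move=> x y z; exact: lca_ultra timeS _ _ _.
have sdiag : forall x, s x x = 1%R by move=> x; rewrite /s lcaf_self tleaf.
have sge1 : forall x y, (1 <= s x y)%R.
  move=> x y; rewrite -(tleaf (sigma x)).
  have hh : preceq S0 (lf0 (sigma x)) (lcaf S0 (lf0 (sigma x)) (lf0 (sigma y))).
    by case: (lcafP S0 (lf0 (sigma x)) (lf0 (sigma y))).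
  exact: (tau_mono timeS hh).
have s1col : forall x y, sigma x <> sigma y -> (1 < s x y)%R.
  move=> x y hne; rewrite -(tleaf (sigma x)).
  have hh : lf0 (sigma x) <> lf0 (sigma y) by move=> h; apply: hne; exact: injS h.
  exact: (leaf_lca_strict timeS (lS _) hh (lS _)).
have s1eq : forall x y, (1 < s x y)%R -> sigma x <> sigma y.
  move=> x y h e; rewrite /s e lcaf_self tleaf in h; lra.
have hP : forall x y, x <> y -> Glt x y || Geq x y -> (1 < s x y)%R.
  move=> x y _ /orP [h|h]; apply: s1col; [exact: pc1 | exact: pc2].
have dispE : forall x y z, displays S0 lf0 (sigma x) (sigma y) (sigma z) <->
    ((s x y < s x z)%R /\ s x z = s y z).
  move=> x y z; exact: (displays_iff (M:=M) timeS lf0 (sigma x) (sigma y) (sigma z)).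
have hR1 : forall x y z, (1 < s x y)%R -> (1 < s x z)%R -> (1 < s y z)%R ->
    Glt x z -> Glt y z -> ~~ Glt x y -> (s x y < s x z)%R /\ s x z = s y z.
  move=> x y z h1 h2 h3 l1 l2 n3; apply/dispE; apply: hR.
  exists x, y, z; do 3 (split; first by []).
  split; first by split; [exact: s1eq h1 | split; [exact: s1eq h2 | exact: s1eq h3]].
  left; split => //; split => //; exact/negP.
have hR2 : forall x y z, (1 < s x y)%R -> (1 < s x z)%R -> (1 < s y z)%R ->
    Ggt x y -> ~~ Ggt x z -> ~~ Ggt y z -> (s x y < s x z)%R /\ s x z = s y z.
  move=> x y z h1 h2 h3 l1 n2 n3; apply/dispE; apply: hR.
  exists x, y, z; do 3 (split; first by []).
  split; first by split; [exact: s1eq h1 | split; [exact: s1eq h2 | exact: s1eq h3]].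
  right; split => //; split; exact/negP.
have hF' : forall x y z, (1 < s x y)%R -> (1 < s x z)%R -> (1 < s y z)%R ->
    Geq x z -> Geq y z -> ~~ Geq x y -> ~ ((s x z < s x y)%R /\ s x y = s z y).
  move=> x y z h1 h2 h3 e1 e2 n3 /dispE hd; apply: (hF _ _ _ _ hd).
  exists x, y, z; split; first by split; [exact: s1eq h1 | split; [exact: s1eq h2 | exact: s1eq h3]].
  do 2 (split; first by []); split; first exact/negP.
  by left.
case: (plS) => [[r [hr hru]] _].
pose be := tS (pt0 S0).
have sbe : forall x y, (s x y < be)%R.
  move=> x y.
  have h1 : preceq S0 (lcaf S0 (lf0 (sigma x)) (lf0 (sigma y))) r.
    case: (lcafP S0 (lf0 (sigma x)) (lf0 (sigma y))) => _ [_ H]; apply: H.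
      apply: (below_root hr hru); by case: (lS (sigma x)).
    apply: (below_root hr hru); by case: (lS (sigma y)).
  have h2 : prec S0 r (pt0 S0).
    case: (hr) => hr0 hpr; have := prec_par hr0; by rewrite hpr.
  have := tau_mono timeS h1; have := timeS _ _ h2; rewrite /s /be; lra.
have hcard : #|[set: L]| <= #|L| by rewrite cardsT.
have [t [t1 [t2 [t3 [t4 t5]]]]] :=
  core_ex H3 ssym sult sdiag sge1 hP hR1 hR2 hF' hcl hcg hcard (fun x y _ _ => sbe x y).
have IN : forall x : L, x \in [set: L] by move=> x; rewrite inE.
have be1 : (1 < be)%R by have := sbe l0 l0; rewrite sdiag.
have dsym : forall x y, t x y = t y x by move=> x y; exact: t2 (IN x) (IN y).
have dult : forall x y z, (t x z <= Rmax (t x y) (t y z))%R.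
  move=> x y z; exact: t3 (IN x) (IN y) (IN z).
have dpos : forall x y, x <> y -> (t x x < t x y)%R.
  move=> x y hne; rewrite t1 //; by case: (t4 x y (IN x) (IN y) hne).
have dtop : forall x y, (t x y < be)%R.
  move=> x y; case: (x =P y) => [<-|hne]; first by rewrite t1.
  by case: (t4 x y (IN x) (IN y) hne).
have [VT [T [lfT [tT [plT [injT [leafT [timeT [hbe hlca]]]]]]]]] :=
  build_tree l0 dsym dult dpos dtop.
have lT : forall x, is_leaf T (lfT x) by move=> x; apply/leafT; exists x.
have tTleaf : forall x, tT (lfT x) = 1%R by move=> x; have := hlca x x; rewrite lcaf_self t1.
pose Pm (v : VT) (m : V0 + V0) : Prop :=
  [/\ (forall w, m = inr w -> w <> pt0 S0 /\ (tS w < tT v)%R /\ (tT v < tS (ptpar S0 w))%R),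
      (forall w, m = inl w -> tS w = tT v),
      (m = inl (pt0 S0) <-> v = pt0 T),
      ((exists w, m = inl w /\ is_leaf S0 w) <-> is_leaf T v) &
      (forall l, lfT l = v -> m = inl (lf0 (sigma l)))].
have hmu : forall v, exists m, Pm v m.
  move=> v; case: (excluded_middle_informative (v = pt0 T)) => [->|h0].
    exists (inl (pt0 S0)); split.
    - by move=> w.
    - by move=> w [<-]; rewrite hbe.
    - by split.
    - split; first by move=> [w [[<-] [hw _]]].
      by move=> [h _].
    - move=> l hl; exfalso; have [h _] := lT l; by apply: h.
  case: (excluded_middle_informative (is_leaf T v)) => hl.
    have [l hlv] := (leafT v).1 hl; subst v.
    exists (inl (lf0 (sigma l))); split.
    - by move=> w.
    - by move=> w [<-]; rewrite tleaf tTleaf.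
    - split => [[e]|e]; first by exfalso; case: (lS (sigma l)) => h _; apply: h.
      by exfalso; case: (lT l) => h _; apply: h.
    - split => _; first exact: hl.
      by exists (lf0 (sigma l)); split.
    - by move=> l' /injT ->.
  have [l' [hl' hpre]] := leaf_below h0.
  have [l hll] := (leafT l').1 hl'; subst l'.
  have ht1 : (tS (lf0 (sigma l)) < tT v)%R.
    rewrite tleaf -(tTleaf l); apply: timeT; split => // e; apply: hl; rewrite -e; exact: lT.
  have ht2 : (tT v < tS (pt0 S0))%R.
    rewrite -/be -hbe; apply: timeT; split => //; exact: pre_p0.
  have [w [hmw [hw0 [hwt hwp]]]] := anc_search timeS ht1 ht2.
  have nleaf : forall l2, lfT l2 = v -> False.
    move=> l2 e; apply: hl; rewrite -e; exact: lT.
  case: (Req_dec (tS (ptpar S0 w)) (tT v)) => he.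
    exists (inl (ptpar S0 w)); split.
    - by move=> u.
    - by move=> u [<-].
    - split => e; last by exfalso; apply: h0.
      case: e => e; rewrite e in he; lra.
    - split; last by move=> hh; exfalso; apply: hl.
      move=> [u [[<-] [_ hnc]]]; exfalso; apply: (hnc w); by split.
    - by move=> l2 /nleaf.
  exists (inr w); split.
  - move=> u [<-]; split => //; split => //; lra.
  - by move=> u.
  - split => e //; exfalso; by apply: h0.
  - split; first by move=> [u [e _]].
    by move=> hh; exfalso; apply: hl.
  - by move=> l2 /nleaf.
pose mu v := proj1_sig (constructive_indefinite_description _ (hmu v)).
have muP : forall v, Pm v (mu v).
  move=> v; rewrite /mu; by case: constructive_indefinite_description.
exists VT, V0, T, lfT, S0, lf0, mu, tT, tS.
split.
  split; first exact: plT.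
  split; first exact: plS.
  split; first by split.
  split; first by split.
  split; first exact: timeT.
  split; first exact: timeS.
  split; first by move=> x w hw; case: (muP x) => h _ _ _ _; case: (h w hw).
  split; first by move=> x; case: (muP x).
  split; first by move=> x; case: (muP x).
  split; first by move=> l; case: (muP (lfT l)) => _ _ _ _ h; exact: h.
  split; first by move=> x w; case: (muP x) => _ h _ _ _; exact: h.
  by move=> x w hw; case: (muP x) => h _ _ _ _; case: (h w hw).
have neqE : forall x y, Glt x y || Geq x y || Ggt x y -> x <> y.
  move=> x y h e; subst y; by rewrite (lt_irr H3) (eq_irr H3) (gt_irr H3) in h.
split.
  move=> x y; rewrite scen_graphE hlca; split => [h|[hne h]].
    have hne : x <> y by apply: neqE; rewrite h.
    split => //; case: (t5 x y (IN x) (IN y) hne) => a _; exact: a h.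
  case: (t5 x y (IN x) (IN y) hne) => _ [b c].
  rewrite -/(s x y) in h.
  case: (part H3 hne) => [[h1 _ _] //|[_ e _]|[_ _ g]]; [have := b e | have := c g]; lra.
split.
  move=> x y; rewrite scen_graphE hlca; split => [h|[hne h]].
    have hne : x <> y by apply: neqE; rewrite h orbT.
    split => //; case: (t5 x y (IN x) (IN y) hne) => _ [a _]; exact: a h.
  case: (t5 x y (IN x) (IN y) hne) => a [_ c].
  rewrite -/(s x y) in h.
  case: (part H3 hne) => [[e _ _]|[_ h1 _] //|[_ _ g]]; [have := a e | have := c g]; lra.
move=> x y; rewrite scen_graphE hlca; split => [h|[hne h]].
  have hne : x <> y by apply: neqE; rewrite h !orbT.
  split => //; case: (t5 x y (IN x) (IN y) hne) => _ [_ a]; exact: a h.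
case: (t5 x y (IN x) (IN y) hne) => a [b _].
rewrite /Rgt -/(s x y) in h.
case: (part H3 hne) => [[e _ _]|[_ e _]|[_ _ h1] //]; [have := a e | have := b e]; lra.
Qed.

Unset Implicit Arguments.

Theorem theorem2 (L M : finType) (Glt Geq Ggt : rel L) (sigma : L -> M)
  (HL : 0 < #|L|) (H3 : graph3partition Glt Geq Ggt) :
  explained_by_relaxed_scenario Glt Geq Ggt sigma <->
  [/\ properly_colored Glt sigma, properly_colored Geq sigma,
      cograph Glt, cograph Ggt &
      triples_consistent (RS Glt Geq Ggt sigma) (FS Glt Geq Ggt sigma)].
Proof.
split; [exact: necessity | exact: sufficiency].
Qed.
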